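(* Let $\mathcal{N}$ be the association scheme generated by the Nauru graph $GP(12,5)$ (a rank-$7$ scheme), with distinguished relation $R_1$ the edge relation of $GP(12,5)$. Then every association scheme with a distinguished relation having the same relation-distribution diagram as $(\mathcal{N},R_1)$ is isomorphic to $\mathcal{N}$ (with the distinguished relation corresponding to $R_1$).
   Context: A (symmetric) association scheme with rank $d+1$ on a finite set $X$ is a partition $\mathcal{R}=\{R_0,\dots,R_d\}$ of $X\times X$ with $R_0$ the diagonal, each $R_i$ symmetric, and numbers $p^h_{ij}$ such that for every $(x,y)\in R_h$ the number of $z$ with $(x,z)\in R_i$, $(z,y)\in R_j$ equals $p^h_{ij}$; $k_i=p^0_{ii}$. The association scheme generated by a graph is the association scheme of minimal rank having the graph's edge relation as a relation. Two schemes with distinguished relations $R_1$, $R'_1$ have the same relation-distribution diagram if they have the same rank and there is a bijection $\sigma$ of the index set with $\sigma(0)=0$, $\sigma(1)=1$, $k_i=k'_{\sigma(i)}$ and $p^i_{1j}=p'^{\sigma(i)}_{1\sigma(j)}$ for all $i,j$. The generalized Petersen graph $GP(n,s)$ has vertices $i$ and $i^*$ for $i\in\mathbb{Z}_n$, with $i$ adjacent to $i\pm1$ and $i^*$, and $i^*$ adjacent to $(i\pm s)^*$. *)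

(* Defs.v *)
From mathcomp Require Import all_boot all_fingroup.
Set Implicit Arguments. Unset Strict Implicit. Unset Printing Implicit Defensive.

(* A symmetric association scheme of rank n.+1 on a finite set X is given by
   the relation-index function r : X -> X -> 'I_n.+1, where R_i = {(x,y) | r x y = i}. *)
Definition is_scheme (X : finType) (n : nat) (r : X -> X -> 'I_n.+1) : Prop :=
  [/\ (forall x y, (r x y == ord0) = (x == y)),
      (forall x y, r x y = r y x),
      (forall i, exists x y, r x y = i)
    & (forall x y x' y' i j, r x y = r x' y' ->
         #|[set z | (r x z == i) && (r z y == j)]|
         = #|[set z | (r x' z == i) && (r z y' == j)]|)].

(* The intersection number p^h_{ij} (computed at some pair in R_h; 0 if R_h is empty). *)
Definition pnum (X : finType) (n : nat) (r : X -> X -> 'I_n.+1) (h i j : 'I_n.+1) : nat :=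
  if [pick p : X * X | r p.1 p.2 == h] is Some p
  then #|[set z | (r p.1 z == i) && (r z p.2 == j)]|
  else 0.

Definition valency (X : finType) (n : nat) (r : X -> X -> 'I_n.+1) (i : 'I_n.+1) : nat :=
  pnum r ord0 i i.

Definition i1 {n : nat} : 'I_n.+2 := @Ordinal n.+2 1 isT.

Definition same_diagram (X Y : finType) (n : nat)
    (r : X -> X -> 'I_n.+2) (s : Y -> Y -> 'I_n.+2) : Prop :=
  exists sigma : {perm 'I_n.+2},
    [/\ sigma ord0 = ord0, sigma i1 = i1,
        (forall i, valency r i = valency s (sigma i))
      & (forall i j, pnum r i i1 j = pnum s (sigma i) i1 (sigma j))].

(* Generalized Petersen graph GP(n,s): vertex (false, i) is i, (true, i) is i^*. *)
Definition gp_adj (n s : nat) (u v : bool * 'I_n) : bool :=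
  match u, v with
  | (false, i), (false, j) => (val j == (i + 1) %% n) || (val i == (j + 1) %% n)
  | (true, i), (true, j) => (val j == (i + s) %% n) || (val i == (j + s) %% n)
  | (false, i), (true, j) => i == j
  | (true, i), (false, j) => i == j
  end.
Arguments gp_adj : clear implicits.

Definition scheme_iso (X Y : finType) (n : nat)
    (r : X -> X -> 'I_n.+2) (s : Y -> Y -> 'I_n.+2) : Prop :=
  exists f : X -> Y, bijective f /\
  exists sigma : {perm 'I_n.+2}, sigma i1 = i1 /\
    forall x y, s (f x) (f y) = sigma (r x y).

(* Main.v *)
Require Import Defs.
From mathcomp Require Import all_boot all_fingroup.
From mathcomp Require Import zify.
Set Implicit Arguments. Unset Strict Implicit. Unset Printing Implicit Defensive.

Lemma sum_b (T : finType) (P : pred T) : \sum_z (P z : nat) = #|[set z | P z]|.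
Proof. rewrite -sum1dep_card [in RHS]big_mkcond /=; apply: eq_bigr => z _; by case: (P z). Qed.

Section Generic.
Variables (Y : finType) (n : nat) (s : Y -> Y -> 'I_n.+1).
Hypothesis Hs : is_scheme s.

Definition cnt (x y : Y) (i j : 'I_n.+1) := #|[set z | (s x z == i) && (s z y == j)]|.

Lemma pnum_at x y i j : pnum s (s x y) i j = cnt x y i j.
Proof.
case: Hs => _ _ _ H4; rewrite /pnum; case: pickP => [[a b] /= /eqP E|/(_ (x,y))/=]; last by rewrite eqxx.
exact: H4.
Qed.

Lemma s_sym x y : s x y = s y x. Proof. by case: Hs. Qed.
Lemma s_diag x y : (s x y == ord0) = (x == y). Proof. by case: Hs. Qed.
Lemma s_xx x : s x x = ord0. Proof. by apply/eqP; rewrite s_diag. Qed.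

Lemma cnt_sym x y i j : cnt x y i j = cnt y x j i.
Proof. rewrite /cnt; apply: eq_card => z; rewrite !inE andbC (s_sym z x) (s_sym y z) //. Qed.

Lemma valency_at x i : valency s i = #|[set z | s x z == i]|.
Proof.
rewrite /valency -(s_xx x) pnum_at /cnt; apply: eq_card => z; rewrite !inE (s_sym z x).
by case: (s x z == i).
Qed.

Lemma pnum_sym h i j : pnum s h i j = pnum s h j i.
Proof.
case: Hs => _ _ H3 _; case: (H3 h) => x [y <-]; by rewrite !pnum_at cnt_sym -pnum_at (s_sym y x) pnum_at.
Qed.

End Generic.

Section Relabel.
Variables (Y : finType) (n : nat).

Lemma pnum_ext (s s' : Y -> Y -> 'I_n.+1) : (forall x y, s x y = s' x y) ->
  forall h i j, pnum s h i j = pnum s' h i j.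
Proof.
move=> E h i j; rewrite /pnum.
rewrite (eq_pick (Q := fun p : Y * Y => s p.1 p.2 == h)); last by move=> p /=; rewrite E.
case: pickP => // p _; apply: eq_card => z; by rewrite !inE !E.
Qed.

Lemma valency_ext (s s' : Y -> Y -> 'I_n.+1) : (forall x y, s x y = s' x y) ->
  forall i, valency s i = valency s' i.
Proof. by move=> E i; rewrite /valency (pnum_ext E). Qed.

Variables (s : Y -> Y -> 'I_n.+1) (t : {perm 'I_n.+1}).

Lemma pnum_relab h i j : pnum (fun y y' => t (s y y')) (t h) (t i) (t j) = pnum s h i j.
Proof.
rewrite /pnum.
rewrite (eq_pick (Q := fun p : Y * Y => s p.1 p.2 == h)); last by move=> p /=; rewrite (inj_eq perm_inj).
case: pickP => // p _; apply: eq_card => z; by rewrite !inE !(inj_eq perm_inj).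
Qed.

Lemma valency_relab i : t ord0 = ord0 -> valency (fun y y' => t (s y y')) (t i) = valency s i.
Proof. by move=> t0; rewrite /valency -{1}t0 pnum_relab. Qed.

Lemma scheme_relab : is_scheme s -> t ord0 = ord0 -> is_scheme (fun y y' => t (s y y')).
Proof.
case=> H1 H2 H3 H4 t0; split.
- by move=> x y; rewrite -t0 (inj_eq perm_inj) H1.
- by move=> x y; rewrite H2.
- move=> i; case: (H3 (t^-1 i)%g) => x [y E]; exists x, y; by rewrite E permKV.
- move=> x y x' y' i j E.
  have E' : s x y = s x' y' by apply: (perm_inj E).
  have := H4 _ _ _ _ (t^-1 i)%g (t^-1 j)%g E'.
  have C a b : #|[set z | (t (s a z) == i) && (t (s z b) == j)]| =
               #|[set z | (s a z == (t^-1 i)%g) && (s z b == (t^-1 j)%g)]|.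
    by apply: eq_card => z; rewrite !inE -{1}(permKV t i) -{1}(permKV t j) !(inj_eq (@perm_inj _ t)).
  by rewrite !C.
Qed.
End Relabel.

Notation X := (bool * 'I_12)%type.
Definition ntbl : seq (seq nat) := [::
  [:: 0; 1; 2; 4; 6; 4; 5; 4; 6; 4; 2; 1; 1; 2; 3; 5; 4; 2; 3; 2; 4; 5; 3; 2];
  [:: 1; 0; 1; 2; 4; 6; 4; 5; 4; 6; 4; 2; 2; 1; 2; 3; 5; 4; 2; 3; 2; 4; 5; 3];
  [:: 2; 1; 0; 1; 2; 4; 6; 4; 5; 4; 6; 4; 3; 2; 1; 2; 3; 5; 4; 2; 3; 2; 4; 5];
  [:: 4; 2; 1; 0; 1; 2; 4; 6; 4; 5; 4; 6; 5; 3; 2; 1; 2; 3; 5; 4; 2; 3; 2; 4];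
  [:: 6; 4; 2; 1; 0; 1; 2; 4; 6; 4; 5; 4; 4; 5; 3; 2; 1; 2; 3; 5; 4; 2; 3; 2];
  [:: 4; 6; 4; 2; 1; 0; 1; 2; 4; 6; 4; 5; 2; 4; 5; 3; 2; 1; 2; 3; 5; 4; 2; 3];
  [:: 5; 4; 6; 4; 2; 1; 0; 1; 2; 4; 6; 4; 3; 2; 4; 5; 3; 2; 1; 2; 3; 5; 4; 2];
  [:: 4; 5; 4; 6; 4; 2; 1; 0; 1; 2; 4; 6; 2; 3; 2; 4; 5; 3; 2; 1; 2; 3; 5; 4];
  [:: 6; 4; 5; 4; 6; 4; 2; 1; 0; 1; 2; 4; 4; 2; 3; 2; 4; 5; 3; 2; 1; 2; 3; 5];
  [:: 4; 6; 4; 5; 4; 6; 4; 2; 1; 0; 1; 2; 5; 4; 2; 3; 2; 4; 5; 3; 2; 1; 2; 3];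
  [:: 2; 4; 6; 4; 5; 4; 6; 4; 2; 1; 0; 1; 3; 5; 4; 2; 3; 2; 4; 5; 3; 2; 1; 2];
  [:: 1; 2; 4; 6; 4; 5; 4; 6; 4; 2; 1; 0; 2; 3; 5; 4; 2; 3; 2; 4; 5; 3; 2; 1];
  [:: 1; 2; 3; 5; 4; 2; 3; 2; 4; 5; 3; 2; 0; 4; 2; 4; 6; 1; 5; 1; 6; 4; 2; 4];
  [:: 2; 1; 2; 3; 5; 4; 2; 3; 2; 4; 5; 3; 4; 0; 4; 2; 4; 6; 1; 5; 1; 6; 4; 2];
  [:: 3; 2; 1; 2; 3; 5; 4; 2; 3; 2; 4; 5; 2; 4; 0; 4; 2; 4; 6; 1; 5; 1; 6; 4];
  [:: 5; 3; 2; 1; 2; 3; 5; 4; 2; 3; 2; 4; 4; 2; 4; 0; 4; 2; 4; 6; 1; 5; 1; 6];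
  [:: 4; 5; 3; 2; 1; 2; 3; 5; 4; 2; 3; 2; 6; 4; 2; 4; 0; 4; 2; 4; 6; 1; 5; 1];
  [:: 2; 4; 5; 3; 2; 1; 2; 3; 5; 4; 2; 3; 1; 6; 4; 2; 4; 0; 4; 2; 4; 6; 1; 5];
  [:: 3; 2; 4; 5; 3; 2; 1; 2; 3; 5; 4; 2; 5; 1; 6; 4; 2; 4; 0; 4; 2; 4; 6; 1];
  [:: 2; 3; 2; 4; 5; 3; 2; 1; 2; 3; 5; 4; 1; 5; 1; 6; 4; 2; 4; 0; 4; 2; 4; 6];
  [:: 4; 2; 3; 2; 4; 5; 3; 2; 1; 2; 3; 5; 6; 1; 5; 1; 6; 4; 2; 4; 0; 4; 2; 4];
  [:: 5; 4; 2; 3; 2; 4; 5; 3; 2; 1; 2; 3; 4; 6; 1; 5; 1; 6; 4; 2; 4; 0; 4; 2];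
  [:: 3; 5; 4; 2; 3; 2; 4; 5; 3; 2; 1; 2; 2; 4; 6; 1; 5; 1; 6; 4; 2; 4; 0; 4];
  [:: 2; 3; 5; 4; 2; 3; 2; 4; 5; 3; 2; 1; 4; 2; 4; 6; 1; 5; 1; 6; 4; 2; 4; 0]].
Definition ptbl : seq (seq (seq nat)) := [:: [:: [:: 1; 0; 0; 0; 0; 0; 0]; [:: 0; 3; 0; 0; 0; 0; 0]; [:: 0; 0; 6; 0; 0; 0; 0]; [:: 0; 0; 0; 3; 0; 0; 0]; [:: 0; 0; 0; 0; 6; 0; 0]; [:: 0; 0; 0; 0; 0; 3; 0]; [:: 0; 0; 0; 0; 0; 0; 2]];
 [:: [:: 0; 1; 0; 0; 0; 0; 0]; [:: 1; 0; 2; 0; 0; 0; 0]; [:: 0; 2; 0; 2; 2; 0; 0]; [:: 0; 0; 2; 0; 0; 1; 0]; [:: 0; 0; 2; 0; 0; 2; 2]; [:: 0; 0; 0; 1; 2; 0; 0]; [:: 0; 0; 0; 0; 2; 0; 0]];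
 [:: [:: 0; 0; 1; 0; 0; 0; 0]; [:: 0; 1; 0; 1; 1; 0; 0]; [:: 1; 0; 2; 0; 0; 2; 1]; [:: 0; 1; 0; 0; 2; 0; 0]; [:: 0; 1; 0; 2; 3; 0; 0]; [:: 0; 0; 2; 0; 0; 0; 1]; [:: 0; 0; 1; 0; 0; 1; 0]];
 [:: [:: 0; 0; 0; 1; 0; 0; 0]; [:: 0; 0; 2; 0; 0; 1; 0]; [:: 0; 2; 0; 0; 4; 0; 0]; [:: 1; 0; 0; 0; 0; 0; 2]; [:: 0; 0; 4; 0; 0; 2; 0]; [:: 0; 1; 0; 0; 2; 0; 0]; [:: 0; 0; 0; 2; 0; 0; 0]];
 [:: [:: 0; 0; 0; 0; 1; 0; 0]; [:: 0; 0; 1; 0; 0; 1; 1]; [:: 0; 1; 0; 2; 3; 0; 0]; [:: 0; 0; 2; 0; 0; 1; 0]; [:: 1; 0; 3; 0; 0; 1; 1]; [:: 0; 1; 0; 1; 1; 0; 0]; [:: 0; 1; 0; 0; 1; 0; 0]];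
 [:: [:: 0; 0; 0; 0; 0; 1; 0]; [:: 0; 0; 0; 1; 2; 0; 0]; [:: 0; 0; 4; 0; 0; 0; 2]; [:: 0; 1; 0; 0; 2; 0; 0]; [:: 0; 2; 0; 2; 2; 0; 0]; [:: 1; 0; 0; 0; 0; 2; 0]; [:: 0; 0; 2; 0; 0; 0; 0]];
 [:: [:: 0; 0; 0; 0; 0; 0; 1]; [:: 0; 0; 0; 0; 3; 0; 0]; [:: 0; 0; 3; 0; 0; 3; 0]; [:: 0; 0; 0; 3; 0; 0; 0]; [:: 0; 3; 0; 0; 3; 0; 0]; [:: 0; 0; 3; 0; 0; 0; 0]; [:: 1; 0; 0; 0; 0; 0; 1]]].
Definition Nn (a b : nat) : nat := nth 0 (nth [::] ntbl a) b.
Definition pN (h i j : nat) : nat := nth 0 (nth [::] (nth [::] ptbl h) i) j.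
Definition idx (x : X) : nat := (if x.1 then 12 else 0) + x.2.
Definition NR (x y : X) : 'I_7 := Ordinal (ltn_pmod (Nn (idx x) (idx y)) (isT : 0 < 7)).

Lemma sum_count (T : eqType) (P : pred T) s : \sum_(z <- s) (P z : nat) = count P s.
Proof. by elim: s => [|a s IH]; rewrite ?big_nil ?big_cons //= IH. Qed.

Lemma sum_iota_ord k (F : nat -> nat) : \sum_(c <- iota k 12) F c = \sum_(j < 12) F (k + j).
Proof.
rewrite -[in LHS](addn0 k) iotaDl big_map -(big_mkord xpredT (fun j => F (k + j))).
by rewrite /index_iota subn0.
Qed.
Lemma sumX (F : nat -> nat) : \sum_(z : X) F (idx z) = \sum_(c <- iota 0 12 ++ iota 12 12) F c.
Proof.
rewrite -(pair_big xpredT xpredT (fun b i => F (idx (b, i)))) big_bool big_cat !sum_iota_ord.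
have H : forall a b c d : nat, a = d -> b = c -> a + b = c + d by move=> a b c d -> ->; rewrite addnC.
by apply: H; apply: eq_bigr => j _.
Qed.
Lemma card_idx (q : pred nat) : #|[set z : X | q (idx z)]| = count q (iota 0 24).
Proof. by rewrite -sum_b (sumX (fun c => q c : nat)) sum_count. Qed.

Definition adjn (a b : nat) : bool :=
  if (a < 12) == (b < 12) then
    let s := if a < 12 then 1 else 5 in
    (b %% 12 == (a %% 12 + s) %% 12) || (a %% 12 == (b %% 12 + s) %% 12)
  else a %% 12 == b %% 12.

Lemma adjnE x y : gp_adj 12 5 x y = adjn (idx x) (idx y).
Proof.
have M k : k < 12 -> (12 + k) %% 12 = k by move=> Hk; rewrite modnDl modn_small.
have L k : (12 + k < 12) = false by rewrite ltnNge leq_addr.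
case: x y => [[] [i Hi]] [[] [j Hj]]; rewrite /adjn /idx /= ?add0n ?M // ?L ?Hi ?Hj ?(modn_small Hi) ?(modn_small Hj) //=.
Qed.

Lemma idx_lt x : idx x < 24.
Proof. case: x => [[] [i Hi]] /=; rewrite /idx /=; lia. Qed.
Lemma idx_inj : injective idx.
Proof.
move=> [[] [i Hi]] [[] [j Hj]]; rewrite /idx /= => E; try (exfalso; lia);
 have Eij : i = j by lia.
all: subst j; congr pair; exact: val_inj.
Qed.

Definition all24 (P : nat -> bool) := all P (iota 0 24).
Definition all7 (P : nat -> bool) := all P (iota 0 7).
Lemma all24P (P : nat -> bool) : all24 P -> forall x : X, P (idx x).
Proof. move=> /allP H x; apply: H; rewrite mem_iota add0n idx_lt. done. Qed.
Lemma all7P (P : nat -> bool) : all7 P -> forall i : 'I_7, P i.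
Proof. move=> /allP H i; apply: H; rewrite mem_iota add0n ltn_ord. done. Qed.

Definition check1 := all24 (fun a => all24 (fun b =>
   [&& Nn a b < 7, Nn a b == Nn b a, (Nn a b == 0) == (a == b) & (Nn a b == 1) == adjn a b])).
Lemma check1_ok : check1. Proof. by vm_compute. Qed.
Definition check2 := all24 (fun a => all24 (fun b => all7 (fun i => all7 (fun j =>
   count (fun c => (Nn a c == i) && (Nn c b == j)) (iota 0 24) == pN (Nn a b) i j)))).
Lemma check2_ok : check2. Proof. by vm_compute. Qed.

Lemma check1P x y : [&& Nn (idx x) (idx y) < 7, Nn (idx x) (idx y) == Nn (idx y) (idx x),
   (Nn (idx x) (idx y) == 0) == (idx x == idx y) & (Nn (idx x) (idx y) == 1) == adjn (idx x) (idx y)].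
Proof. exact: (all24P (all24P check1_ok x) y). Qed.

Lemma NR_val0 x y : nat_of_ord (NR x y) = Nn (idx x) (idx y).
Proof. by rewrite /= modn_small //; case/and4P: (check1P x y). Qed.
Lemma NR_val x y : \val (NR x y) = Nn (idx x) (idx y).
Proof. exact: NR_val0. Qed.

Lemma idx_surj b : b < 24 -> exists x, idx x = b.
Proof.
move=> Hb; case: (ltnP b 12) => H.
  by exists (false, Ordinal H).
have H' : b - 12 < 12 by lia.
by exists (true, Ordinal H'); rewrite /idx /=; lia.
Qed.

Definition check3 := all7 (fun i => has (fun b => Nn 0 b == i) (iota 0 24)).
Lemma check3_ok : check3. Proof. by vm_compute. Qed.

Lemma cntNR x y (i j : 'I_7) : #|[set z | (NR x z == i) && (NR z y == j)]| = pN (NR x y) i j.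
Proof.
have -> : #|[set z | (NR x z == i) && (NR z y == j)]| =
   count (fun c => (Nn (idx x) c == i) && (Nn c (idx y) == j)) (iota 0 24).
  rewrite -(card_idx (fun c => (Nn (idx x) c == i) && (Nn c (idx y) == j))).
  by apply: eq_card => z; rewrite !inE -!val_eqE !NR_val.
rewrite NR_val.
exact: (eqP (all7P (all7P (all24P (all24P check2_ok x) y) i) j)).
Qed.

Lemma NR_scheme : is_scheme NR.
Proof.
split.
- move=> x y; rewrite -val_eqE NR_val /= -(inj_eq idx_inj).
  by case/and4P: (check1P x y) => _ _ /eqP.
- move=> x y; apply: val_inj; rewrite !NR_val.
  by case/and4P: (check1P x y) => _ /eqP.
- move=> i; have /hasP [b Hb /eqP Eb] := all7P check3_ok i.
  have [y Ey] : exists y, idx y = b by apply: idx_surj; move: Hb; rewrite mem_iota.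
  have [x Ex] : exists x, idx x = 0 by apply: idx_surj.
  exists x, y; apply: val_inj; by rewrite NR_val Ex Ey.
- move=> x y x' y' i j E.
  by rewrite !cntNR E.
Qed.

Lemma NR_adj x y : (NR x y == Ordinal (isT : 1 < 7)) = gp_adj 12 5 x y.
Proof.
rewrite adjnE -val_eqE NR_val /=.
by case/and4P: (check1P x y) => _ _ _ /eqP.
Qed.

Lemma pnumN (h i j : 'I_7) : pnum NR h i j = pN h i j.
Proof.
case: NR_scheme => _ _ H3 H4; case: (H3 h) => x [y <-].
by rewrite (pnum_at NR_scheme) /cnt cntNR.
Qed.

Lemma sum_pick (T : finType) (a : T) (f : T -> nat) : f a = \sum_l (a == l) * f l.
Proof.
rewrite (bigD1 a) //= eqxx mul1n big1 ?addn0 // => l /negbTE.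
by rewrite eq_sym => ->.
Qed.

Fixpoint W (k : nat) (x y : X) : nat :=
  if k is k'.+1 then \sum_z gp_adj 12 5 x z * W k' z y else (x == y).

Fixpoint G m (s : X -> X -> 'I_m.+1) (e : 'I_m.+1) (k : nat) (h : 'I_m.+1) : nat :=
  if k is k'.+1 then \sum_(l : 'I_m.+1) pnum s h e l * G s e k' l else (h == ord0).

Lemma W_G m (s : X -> X -> 'I_m.+1) (e : 'I_m.+1) :
  is_scheme s -> (forall x y, (s x y == e) = gp_adj 12 5 x y) ->
  forall k x y, W k x y = G s e k (s x y).
Proof.
move=> Hs He; elim=> [|k IH] x y /=; first by rewrite s_diag.
under eq_bigr => z _ do rewrite IH -He (sum_pick (s z y) (G s e k)) big_distrr.
rewrite exchange_big /=; apply: eq_bigr => l _.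
under eq_bigr => i _ do rewrite mulnA.
rewrite -big_distrl /=; congr (_ * _).
rewrite (pnum_at Hs) /cnt -sum_b; apply: eq_bigr => z _.
by rewrite mulnb.
Qed.

Definition sum7 (F : nat -> nat) := sumn [seq F l | l <- iota 0 7].
Lemma sum_ord7 (F : nat -> nat) : \sum_(l < 7) F l = sum7 F.
Proof. by rewrite -(big_mkord xpredT F) /index_iota subn0 /sum7 sumnE big_map. Qed.

Fixpoint Gc (k : nat) (h : nat) : nat :=
  if k is k'.+1 then sum7 (fun l => pN h 1 l * Gc k' l) else (h == 0).

Definition one7 : 'I_7 := Ordinal (isT : 1 < 7).

Lemma G_NR k (h : 'I_7) : G NR one7 k h = Gc k h.
Proof.
elim: k h => [|k IH] h //=.
rewrite -sum_ord7; apply: eq_bigr => l _; by rewrite pnumN IH.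
Qed.

Definition check4 := all7 (fun h => all7 (fun h' =>
   (all (fun k => Gc k h == Gc k h') (iota 0 5)) ==> (h == h'))).
Lemma check4_ok : check4. Proof. by vm_compute. Qed.

Lemma W_NR k x y : W k x y = Gc k (NR x y).
Proof. by rewrite (W_G NR_scheme NR_adj) G_NR. Qed.

Lemma W_det x y x' y' : (forall k, W k x y = W k x' y') -> NR x y = NR x' y'.
Proof.
move=> HW; apply/eqP.
have := all7P (all7P check4_ok (NR x y)) (NR x' y'); move/implyP; apply.
by apply/allP => k _; rewrite -!W_NR HW.
Qed.

Lemma refine_NR m (r : X -> X -> 'I_m.+1) (e : 'I_m.+1) :
  is_scheme r -> (forall x y, (r x y == e) = gp_adj 12 5 x y) ->
  forall x y x' y', r x y = r x' y' -> NR x y = NR x' y'.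
Proof.
move=> Hr He x y x' y' E; apply: W_det => k.
by rewrite !(W_G Hr He) E.
Qed.

Lemma sum7_eq (F G : nat -> nat) : (forall m, m < 7 -> F m = G m) -> sum7 F = sum7 G.
Proof.
move=> H; rewrite /sum7; congr sumn; apply/eq_in_map => m; rewrite mem_iota => /andP [_].
exact: H.
Qed.

Definition idc0 (P : nat -> nat -> bool) := all7 (fun h => all7 (fun j => P h j)).
Definition I1 := idc0 (fun h j => sum7 (fun m => pN h 1 m * pN m 1 j) == 3 * (h == j) + pN h 2 j).
Lemma I1_ok : I1. Proof. by vm_compute. Qed.
Definition I2 := idc0 (fun h j => sum7 (fun m => pN h 1 m * pN m 2 j) == 2 * pN h 1 j + 2 * pN h 3 j + pN h 4 j).
Lemma I2_ok : I2. Proof. by vm_compute. Qed.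
Definition I3 := idc0 (fun h j => sum7 (fun m => pN h 1 m * (2 * pN m 3 j + pN m 4 j)) ==
   3 * pN h 2 j + 4 * pN h 5 j + 3 * pN h 6 j).
Lemma I3_ok : I3. Proof. by vm_compute. Qed.
Definition I4 := idc0 (fun h j => sum7 (fun m => pN h 1 m * (4 * pN m 5 j + 3 * pN m 6 j)) ==
   4 * pN h 3 j + 7 * pN h 4 j).
Lemma I4_ok : I4. Proof. by vm_compute. Qed.
Definition I5 := idc0 (fun h j => sum7 (fun l => pN h l j) == pN 0 j j).
Lemma I5_ok : I5. Proof. by vm_compute. Qed.

Definition I0_ok : all7 (fun h => all7 (fun j => pN h 0 j == (h == j))).
Proof. by vm_compute. Qed.

Section Core.
Variables (Y : finType) (S : Y -> Y -> 'I_7).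
Hypothesis HS : is_scheme S.
Hypothesis HP : forall h j : 'I_7, pnum S h one7 j = pN h 1 j.
Hypothesis HV : forall i : 'I_7, valency S i = pN 0 i i.

Definition c (u v : Y) (i j : nat) : nat :=
  #|[set z | (nat_of_ord (S u z) == i) && (nat_of_ord (S z v) == j)]|.

Lemma c_cnt u v (i j : 'I_7) : c u v i j = cnt S u v i j.
Proof. by apply: eq_card => z; rewrite !inE. Qed.

Lemma c1 u v j : j < 7 -> c u v 1 j = pN (S u v) 1 j.
Proof.
move=> Hj; have -> : j = Ordinal Hj by [].
by rewrite (c_cnt u v one7) -(pnum_at HS) HP.
Qed.

Lemma c0 u v j : c u v 0 j = (nat_of_ord (S u v) == j).
Proof.
have H0 z : (nat_of_ord (S u z) == 0) = (u == z) by rewrite -(s_diag HS u z).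
rewrite /c; case: eqP => E.
- rewrite (_ : [set z | _] = [set u]) ?cards1 //; apply/setP => z; rewrite !inE H0 eq_sym.
  by case: (eqVneq z u) => [->|_] //=; rewrite E eqxx.
- apply/eqP; rewrite cards_eq0; apply/eqP/setP => z; rewrite !inE H0.
  by case: (eqVneq u z) => [<-|_] //=; move/eqP: E => /negbTE ->.
Qed.

Lemma part_l u (P : pred Y) (F : nat -> nat) :
  \sum_z (P z : nat) * F (S u z) =
  sum7 (fun l => F l * #|[set z | (nat_of_ord (S u z) == l) && P z]|).
Proof.
under eq_bigr => z _ do rewrite (sum_pick (S u z) (fun l : 'I_7 => F l)) big_distrr.
rewrite exchange_big /= -sum_ord7; apply: eq_bigr => l _.
rewrite (eq_bigr (fun z => F l * ((nat_of_ord (S u z) == l) && P z))) => [|z _]; last first.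
  by rewrite mulnA mulnC mulnb andbC.
by rewrite -big_distrr /= sum_b.
Qed.

Lemma c_def u v i j : c u v i j =
  \sum_z ((nat_of_ord (S u z) == i) : nat) * ((nat_of_ord (S z v) == j) : nat).
Proof. by rewrite /c -sum_b; apply: eq_bigr => z _; rewrite mulnb. Qed.

Lemma EL u v i j : i < 7 ->
  \sum_w ((nat_of_ord (S u w) == 1) : nat) * c w v i j = sum7 (fun l => pN l 1 i * c u v l j).
Proof.
move=> Hi.
under eq_bigr => w _ do rewrite c_def big_distrr.
rewrite exchange_big /=.
transitivity (\sum_z ((nat_of_ord (S z v) == j) : nat) * pN (S u z) 1 i).
  apply: eq_bigr => z _; rewrite -(c1 _ _ Hi) c_def big_distrr /=.
  by apply: eq_bigr => w _; rewrite mulnA mulnC.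
rewrite (part_l u (fun z => nat_of_ord (S z v) == j) (fun l => pN l 1 i)).
by apply: sum7_eq => l _; rewrite /c.
Qed.

Lemma AF u v (F : Y -> nat) (phi : nat -> nat) : (forall w, F w = phi (S w v)) ->
  \sum_w ((nat_of_ord (S u w) == 1) : nat) * F w = sum7 (fun m => pN (S u v) 1 m * phi m).
Proof.
move=> HF.
under eq_bigr => w _ do rewrite HF (s_sym HS w v).
rewrite (part_l v (fun w => nat_of_ord (S u w) == 1) phi).
apply: sum7_eq => m Hm; rewrite -(c1 _ _ Hm) mulnC; congr (_ * _).
by apply: eq_card => w; rewrite !inE andbC (s_sym HS w v).
Qed.

Definition idc (P : nat -> nat -> bool) := all7 (fun h => all7 (fun j => P h j)).
Lemma idcP P : idc P -> forall h j : 'I_7, P h j.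
Proof. by move=> H h j; apply: (all7P (all7P H h) j). Qed.

Lemma c1' v j : j < 7 -> forall w, c w v 1 j = pN (S w v) 1 j.
Proof. by move=> Hj w; rewrite c1. Qed.

Lemma S2 u v (j : 'I_7) : c u v 2 j = pN (S u v) 2 j.
Proof.
have := EL u v j (isT : 1 < 7).
have -> : \sum_w ((nat_of_ord (S u w) == 1) : nat) * c w v 1 j =
   sum7 (fun m => pN (S u v) 1 m * pN m 1 j) := AF u (c1' v (ltn_ord j)).
rewrite (eqP (idcP I1_ok (S u v) j)).
set a := pN (S u v) 2 j.
rewrite /sum7 /pN /= c0.
lia.
Qed.
Lemma lin2 (a x y : Y -> nat) (k l : nat) :
  \sum_w a w * (k * x w + l * y w) = k * \sum_w a w * x w + l * \sum_w a w * y w.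
Proof.
rewrite !big_distrr -big_split /=; apply: eq_bigr => w _.
by rewrite mulnDr !mulnA [a w * k]mulnC [a w * l]mulnC.
Qed.

Lemma SA u v (j : 'I_7) : 2 * c u v 3 j + c u v 4 j = 2 * pN (S u v) 3 j + pN (S u v) 4 j.
Proof.
have := EL u v j (isT : 2 < 7).
have -> : \sum_w ((nat_of_ord (S u w) == 1) : nat) * c w v 2 j =
   sum7 (fun m => pN (S u v) 1 m * pN m 2 j) := AF u (fun w => S2 w v j).
have H1 := c1 u v (ltn_ord j).
rewrite (eqP (idcP I2_ok (S u v) j)).
set a1 := pN (S u v) 1 j; set a3 := pN (S u v) 3 j; set a4 := pN (S u v) 4 j.
rewrite /sum7 /pN /=.
lia.
Qed.

Lemma SB u v (j : 'I_7) : 4 * c u v 5 j + 3 * c u v 6 j = 4 * pN (S u v) 5 j + 3 * pN (S u v) 6 j.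
Proof.
have E : \sum_w ((nat_of_ord (S u w) == 1) : nat) * (2 * c w v 3 j + 1 * c w v 4 j) =
   sum7 (fun m => pN (S u v) 1 m * (2 * pN m 3 j + pN m 4 j)).
  by apply: AF => w; rewrite mul1n SA.
rewrite (eqP (idcP I3_ok (S u v) j)) lin2 (EL _ _ _ (isT : 3 < 7)) (EL _ _ _ (isT : 4 < 7)) in E.
move: E; have H2 := S2 u v j.
set a2 := pN (S u v) 2 j; set a5 := pN (S u v) 5 j; set a6 := pN (S u v) 6 j.
rewrite /sum7 /pN /=.
lia.
Qed.
Lemma SC u v (j : 'I_7) : 4 * c u v 3 j + 7 * c u v 4 j = 4 * pN (S u v) 3 j + 7 * pN (S u v) 4 j.
Proof.
have E : \sum_w ((nat_of_ord (S u w) == 1) : nat) * (4 * c w v 5 j + 3 * c w v 6 j) =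
   sum7 (fun m => pN (S u v) 1 m * (4 * pN m 5 j + 3 * pN m 6 j)).
  by apply: AF => w; rewrite SB.
rewrite (eqP (idcP I4_ok (S u v) j)) lin2 (EL _ _ _ (isT : 5 < 7)) (EL _ _ _ (isT : 6 < 7)) in E.
move: E.
set a3 := pN (S u v) 3 j; set a4 := pN (S u v) 4 j.
rewrite /sum7 /pN /=.
lia.
Qed.

Lemma Ssum u v (j : 'I_7) : sum7 (fun l => c u v l j) = pN 0 j j.
Proof.
rewrite -(HV j) (valency_at HS v) -sum_b.
rewrite (eq_bigr (fun z => ((nat_of_ord (S z v) == j) : nat) * 1)) => [|z _]; last first.
  by rewrite muln1 (s_sym HS v z).
have := part_l u (fun z => nat_of_ord (S z v) == j) (fun _ => 1); rewrite /= => ->.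
by apply: sum7_eq => l _; rewrite mul1n.
Qed.

Lemma cntS u v (i j : 'I_7) : cnt S u v i j = pN (S u v) i j.
Proof.
rewrite -c_cnt.
have HA := SA u v j; have HB := SB u v j; have HC := SC u v j; have HS2 := S2 u v j.
have H1 := c1 u v (ltn_ord j); have H0 := c0 u v j; have Hsum := Ssum u v j.
have I5 := eqP (idcP I5_ok (S u v) j).
have H0' : pN (S u v) 0 j = (nat_of_ord (S u v) == j).
  by apply/eqP; apply: (all7P (all7P I0_ok (S u v)) j).
move: Hsum I5; rewrite /sum7 /=.
case: i => [[|[|[|[|[|[|[|//]]]]]]] Hi] /=; lia.
Qed.

End Core.

Definition look (T : seq (seq nat)) (a b : nat) : nat := nth 7 (nth [::] T a) b.
Definition upd (T : seq (seq nat)) (a b v : nat) : seq (seq nat) :=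
  set_nth [::] T a (set_nth 7 (nth [::] T a) b v).
Definition upd2 T a b v := upd (upd T a b v) b a v.

Lemma look_upd T a b v x y :
  look (upd T a b v) x y = if (x == a) && (y == b) then v else look T x y.
Proof.
rewrite /look /upd nth_set_nth /=; case: eqP => [->|] //=.
by rewrite nth_set_nth /=; case: eqP.
Qed.

Definition NE := 46.

Definition stepM (nbls : seq nat) (p q : nat) (T : seq (seq nat)) : seq (seq nat) :=
  let h := look T p q in
  if h < 7 then
    let unk := [seq n <- nbls | 7 <= look T n q] in
    let vals := [seq j <- iota 0 7 | count (fun n => look T n q == j) nbls < pN h 1 j] in
    if (unk != [::]) && (size vals == 1) then
      foldl (fun T n => upd2 T n q (head 0 vals)) T unk
    else T
  else T.

Definition stepC (i j : nat) (T : seq (seq nat)) : seq (seq nat) :=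
  if look T i j < 7 then T else
  let cands := [seq K <- iota 0 7 | all (fun a =>
      if (look T a i < 7) && (look T a j < 7) then 0 < pN (look T a j) (look T a i) K else true)
      (iota 0 NE)] in
  if size cands == 1 then upd2 T i j (head 0 cands) else T.

Section Engine.
Variables (Y : finType) (S : Y -> Y -> 'I_7).
Hypothesis HS : is_scheme S.
Hypothesis Hcnt : forall u v (i j : 'I_7), cnt S u v i j = pN (S u v) i j.
Variable env : nat -> Y.

Definition Inv (T : seq (seq nat)) :=
  forall a b, look T a b < 7 -> nat_of_ord (S (env a) (env b)) = look T a b.

Definition rv a b := nat_of_ord (S (env a) (env b)).

Lemma Inv_upd2 T a b v : Inv T -> rv a b = v -> Inv (upd2 T a b v).
Proof.
move=> HT Hv x y; rewrite /upd2 !look_upd.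
case: andP => [[/eqP -> /eqP ->] _|_]; first by rewrite (s_sym HS).
case: andP => [[/eqP -> /eqP ->] _|_]; first by [].
exact: HT.
Qed.
Lemma head_single (s : seq nat) x : size s == 1 -> x \in s -> head 0 s = x.
Proof. by case: s => [|y [|]] //= _; rewrite inE => /eqP. Qed.

Lemma stepC_ok i j T : Inv T -> Inv (stepC i j T).
Proof.
move=> HT; rewrite /stepC; case: ltnP => // Hu.
set cands := [seq K <- _ | _].
case: ifP => // Hsz; apply: Inv_upd2 => //.
apply/esym/head_single => //.
rewrite mem_filter mem_iota add0n leq0n /rv ltn_ord !andbT.
apply/allP => a _.
case: ifP => // /andP [/HT Hai /HT Haj].
rewrite -Hai -Haj -Hcnt lt0n cards_eq0; apply/set0Pn; exists (env i).
by rewrite !inE !eqxx.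
Qed.

Definition NBOK (p : nat) (ns : seq nat) := forall w (j : 'I_7),
  count (fun n => nat_of_ord (S (env n) w) == j) ns =
  #|[set z | (S (env p) z == one7) && (S z w == j)]|.

Lemma count_le_in (T : eqType) (P Q : pred T) (s : seq T) :
  (forall x, x \in s -> P x -> Q x) -> count P s <= count Q s.
Proof.
elim: s => [|y s IH] H //=.
have H' z : z \in s -> P z -> Q z by move=> zs; apply: H; rewrite inE zs orbT.
case Py: (P y); last by apply: leq_add => //; exact: IH.
by rewrite (H y (mem_head _ _) Py) leq_add2l IH.
Qed.

Lemma count_lt (T : eqType) (P Q : pred T) (s : seq T) :
  (forall x, x \in s -> P x -> Q x) -> (exists2 x, x \in s & Q x && ~~ P x) ->
  count P s < count Q s.
Proof.
elim: s => [_ [x]|y s IH H [x]] //.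
have H' z : z \in s -> P z -> Q z by move=> zs; apply: H; rewrite inE zs orbT.
rewrite inE => /orP [/eqP ->|xs] /andP [Qx nPx] /=.
- rewrite (negbTE nPx) Qx add0n add1n ltnS; exact: count_le_in.
- have := IH H' (ex_intro2 _ _ x xs (introT andP (conj Qx nPx))) => Hlt.
  case Py: (P y).
  + by rewrite (H y (mem_head _ _) Py) ltn_add2l.
  + by apply: (leq_trans Hlt); rewrite leq_addl.
Qed.

Lemma fold_upd2 q v l T : Inv T -> (forall n, n \in l -> rv n q = v) ->
  Inv (foldl (fun T n => upd2 T n q v) T l).
Proof.
elim: l T => [|n l IH] T HT Hl //=.
apply: IH => [|m ml]; last by apply: Hl; rewrite inE ml orbT.
by apply: Inv_upd2 => //; apply: Hl; rewrite mem_head.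
Qed.

Lemma stepM_ok ns p q T : Inv T -> NBOK p ns -> Inv (stepM ns p q T).
Proof.
move=> HT Hnb; rewrite /stepM; case: ltnP => // Hh.
set unk := [seq n <- ns | _]; set vals := [seq j <- _ | _].
case: ifP => // /andP [_ Hsz]; apply: fold_upd2 => // n.
rewrite mem_filter => /andP [Hn nns].
apply/esym/head_single => //.
have Hj : rv n q < 7 by rewrite /rv ltn_ord.
rewrite mem_filter mem_iota add0n leq0n Hj !andbT.
rewrite -(HT _ _ Hh).
have -> : pN (rv p q) 1 (rv n q) = count (fun m => nat_of_ord (S (env m) (env q)) == rv n q) ns.
  rewrite (Hnb (env q) (S (env n) (env q))).
  have := Hcnt (env p) (env q) one7 (S (env n) (env q)); rewrite /cnt => ->; by [].
apply: count_lt.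
- move=> m _ /eqP E; apply/eqP; rewrite (HT m q) ?E //.
- exists n => //; rewrite eqxx /=; apply/negP => /eqP E.
  by move: Hn; rewrite E leqNgt Hj.
Qed.
Fixpoint factsP (l : seq (nat * nat * nat)) : Prop :=
  if l is f :: l' then rv f.1.1 f.1.2 = f.2 /\ factsP l' else True.
Fixpoint nbP (l : seq (nat * seq nat)) : Prop :=
  if l is pr :: l' then NBOK pr.1 pr.2 /\ nbP l' else True.

Lemma Inv_foldF l T : Inv T -> factsP l ->
  Inv (foldl (fun T (f : nat * nat * nat) => upd2 T f.1.1 f.1.2 f.2) T l).
Proof.
elim: l T => [|f l IH] T HT //= [Hf Hl].
by apply: IH => //; apply: Inv_upd2.
Qed.

Lemma Inv_empty n : Inv (nseq n (nseq n 7)).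
Proof.
move=> a b; rewrite /look nth_nseq; case: ifP => _; last by rewrite nth_nil.
by rewrite nth_nseq; case: ifP.
Qed.

Lemma Inv_passM (L : seq nat) l T : nbP l -> Inv T -> Inv (foldl (fun T (pr : nat * seq nat) =>
   foldl (fun T q => stepM pr.2 pr.1 q T) T L) T l).
Proof.
elim: l T => [|pr l IH] T //= [Hpr Hl] HT; apply: IH => //.
elim: L T HT => [|q qs IHq] T HT //=.
by apply: IHq; apply: stepM_ok.
Qed.

Lemma Inv_passC (L L' : seq nat) T : Inv T ->
  Inv (foldl (fun T i => foldl (fun T j => stepC i j T) T L') T L).
Proof.
elim: L T => [|i ls IH] T HT //=; apply: IH.
elim: L' T HT => [|j js IHj] T HT //=.
by apply: IHj; apply: stepC_ok.
Qed.
End Engine.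

Definition facts : seq (nat * nat * nat) := [:: (0, 0, 0); (1, 1, 0); (2, 2, 0); (3, 3, 0); (4, 4, 0); (5, 5, 0); (6, 6, 0); (7, 7, 0); (8, 8, 0); (9, 9, 0); (10, 10, 0); (11, 11, 0); (12, 12, 0); (13, 13, 0); (14, 14, 0); (15, 15, 0); (16, 16, 0); (17, 17, 0); (18, 18, 0); (19, 19, 0); (20, 20, 0); (21, 21, 0); (22, 22, 0); (23, 23, 0); (24, 24, 0); (25, 25, 0); (26, 26, 0); (27, 27, 0); (28, 28, 0); (29, 29, 0); (30, 30, 0); (31, 31, 0); (32, 32, 0); (33, 33, 0); (34, 34, 0); (35, 35, 0); (36, 36, 0); (37, 37, 0); (38, 38, 0); (39, 39, 0); (40, 40, 0); (41, 41, 0); (42, 42, 0); (43, 43, 0); (44, 44, 0); (45, 45, 0); (0, 1, 1); (0, 2, 1); (0, 3, 1); (1, 2, 2); (1, 3, 2); (2, 1, 2); (2, 3, 2); (3, 1, 2); (3, 2, 2); (4, 1, 1); (4, 2, 3); (4, 0, 2); (5, 1, 1); (5, 2, 4); (5, 0, 2); (6, 2, 1); (6, 3, 3); (6, 0, 2); (7, 2, 1); (7, 3, 4); (7, 0, 2); (8, 3, 1); (8, 1, 3); (8, 0, 2); (9, 3, 1); (9, 1, 4); (9, 0, 2); (10, 4, 1); (10, 0, 3); (10, 1, 2); (11, 4, 1); (11, 0, 4); (11, 1, 2); (12, 5, 1); (12, 0, 3); (12, 1, 2); (13, 5, 1); (13, 0, 4); (13, 1, 2); (14, 6, 1); (14,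 0, 3); (14, 2, 2); (15, 6, 1); (15, 0, 4); (15, 2, 2); (16, 7, 1); (16, 0, 3); (16, 2, 2); (17, 7, 1); (17, 0, 4); (17, 2, 2); (18, 8, 1); (18, 0, 3); (18, 3, 2); (19, 8, 1); (19, 0, 4); (19, 3, 2); (20, 9, 1); (20, 0, 3); (20, 3, 2); (21, 9, 1); (21, 0, 4); (21, 3, 2); (22, 10, 1); (22, 1, 3); (22, 4, 2); (23, 10, 1); (23, 1, 4); (23, 4, 2); (24, 11, 1); (24, 1, 3); (24, 4, 2); (25, 11, 1); (25, 1, 4); (25, 4, 2); (26, 12, 1); (26, 1, 3); (26, 5, 2); (27, 12, 1); (27, 1, 4); (27, 5, 2); (28, 13, 1); (28, 1, 3); (28, 5, 2); (29, 13, 1); (29, 1, 4); (29, 5, 2); (30, 14, 1); (30, 2, 3); (30, 6, 2); (31, 14, 1); (31, 2, 4); (31, 6, 2); (32, 15, 1); (32, 2, 3); (32, 6, 2); (33, 15, 1); (33, 2, 4); (33, 6, 2); (34, 16, 1); (34, 2, 3); (34, 7, 2); (35, 16, 1); (35, 2, 4); (35, 7, 2); (36, 17, 1); (36, 2, 3); (36, 7, 2); (37, 17, 1); (37, 2, 4); (37, 7, 2); (38, 18, 1); (38, 3, 3); (38, 8, 2); (39, 18, 1); (39, 3, 4); (39, 8, 2); (40, 19, 1); (40, 3, 3); (40, 8, 2); (41, 19, 1); (41, 3, 4); (41, 8, 2); (42, 20, 1); (42, 3, 3); (42, 9, 2); (43, 20, 1); (43, 3, 4); (43, 9, 2); (44,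 21, 1); (44, 3, 3); (44, 9, 2); (45, 21, 1); (45, 3, 4); (45, 9, 2)].
Definition nbls : seq (nat * seq nat) := [:: (0, [:: 1; 2; 3]); (1, [:: 0; 4; 5]); (2, [:: 0; 6; 7]); (3, [:: 0; 8; 9]); (4, [:: 1; 10; 11]); (5, [:: 1; 12; 13]); (6, [:: 2; 14; 15]); (7, [:: 2; 16; 17]); (8, [:: 3; 18; 19]); (9, [:: 3; 20; 21]); (10, [:: 4; 22; 23]); (11, [:: 4; 24; 25]); (12, [:: 5; 26; 27]); (13, [:: 5; 28; 29]); (14, [:: 6; 30; 31]); (15, [:: 6; 32; 33]); (16, [:: 7; 34; 35]); (17, [:: 7; 36; 37]); (18, [:: 8; 38; 39]); (19, [:: 8; 40; 41]); (20, [:: 9; 42; 43]); (21, [:: 9; 44; 45])].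
Definition canon : seq nat := [:: 0; 1; 5; 13; 29; 21; 23; 19; 25; 15; 6; 2; 3; 4; 12; 24; 17; 9; 10; 8; 11; 27; 14; 7].

Definition Tempty : seq (seq nat) := nseq NE (nseq NE 7).
Definition T0 := foldl (fun T (f : nat * nat * nat) => upd2 T f.1.1 f.1.2 f.2) Tempty facts.
Definition passM T := foldl (fun T (pr : nat * seq nat) =>
   foldl (fun T q => stepM pr.2 pr.1 q T) T (iota 0 NE)) T nbls.
Definition passC T := foldl (fun T i => foldl (fun T j => stepC i j T) T (iota 0 NE)) T (iota 0 NE).
Definition pass T := passC (passM T).
Definition Tfin := pass (pass (pass T0)).
Definition final_check := all24 (fun a => all24 (fun b => look Tfin (nth 0 canon a) (nth 0 canon b) == Nn a b)).
Lemma final_ok : final_check.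
Proof. by vm_compute. Qed.

Section Drive.
Variables (Y : finType) (S : Y -> Y -> 'I_7).
Hypothesis HS : is_scheme S.
Hypothesis Hcnt : forall u v (i j : 'I_7), cnt S u v i j = pN (S u v) i j.
Variable env : nat -> Y.
Hypothesis Hf : factsP S env facts.
Hypothesis Hn : nbP S env nbls.

Lemma Inv_fin : Inv S env Tfin.
Proof.
have Hp T : Inv S env T -> Inv S env (pass T).
  by move=> HT; apply: (Inv_passC HS Hcnt); apply: (Inv_passM HS Hcnt).
apply: (Hp); apply: (Hp); apply: (Hp).
by apply: (Inv_foldF HS) => //; apply: Inv_empty.
Qed.

Lemma fin_rel x y : nat_of_ord (S (env (nth 0 canon (idx x))) (env (nth 0 canon (idx y)))) = Nn (idx x) (idx y).
Proof.
have /eqP E := all24P (all24P final_ok x) y.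
rewrite -E; apply: Inv_fin; rewrite E.
by case/and4P: (check1P x y).
Qed.
End Drive.

Definition pn11 : all7 (fun K => (0 < pN 1 1 K) ==> ((K == 0) || (K == 2))).
Proof. by vm_compute. Qed.
Definition sumv : sum7 (fun i => pN 0 i i) = 24.
Proof. by vm_compute. Qed.

Section Gen.
Variables (Y : finType) (S : Y -> Y -> 'I_7).
Hypothesis HS : is_scheme S.
Hypothesis HP : forall h j : 'I_7, pnum S h one7 j = pN h 1 j.
Hypothesis HV : forall i : 'I_7, valency S i = pN 0 i i.
Let Hcnt := cntS HS HP HV.

Lemma sxx x : nat_of_ord (S x x) = 0.
Proof. by rewrite (s_xx HS). Qed.
Lemma symN x y v : nat_of_ord (S x y) = v -> nat_of_ord (S y x) = v.
Proof. by rewrite (s_sym HS). Qed.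
Lemma neqW x z w : nat_of_ord (S x w) != nat_of_ord (S z w) -> x != z.
Proof. by apply: contraNneq => ->. Qed.

Lemma two_step' x y z : nat_of_ord (S x y) = 1 -> nat_of_ord (S y z) = 1 ->
  x != z -> nat_of_ord (S x z) = 2.
Proof.
move=> Hxy Hyz Hxz.
have : 0 < pN (S y z) one7 (S x z).
  rewrite -Hcnt lt0n cards_eq0; apply/set0Pn; exists x.
  have Hyx : S y x = one7 by apply: val_inj; rewrite /= (s_sym HS) Hxy.
  by rewrite !inE Hyx !eqxx.
rewrite Hyz => /(implyP (all7P pn11 (S x z))) /orP [] /eqP // H0.
have : S x z == ord0 by rewrite -val_eqE /= H0.
by rewrite (s_diag HS) (negbTE Hxz).
Qed.

Lemma two_step x y z w : nat_of_ord (S x y) = 1 -> nat_of_ord (S y z) = 1 ->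
  nat_of_ord (S x w) != nat_of_ord (S z w) -> nat_of_ord (S x z) = 2.
Proof. move=> H1 H2 H3; exact: (two_step' H1 H2 (neqW H3)). Qed.

Definition child (P G : Y) (lab : nat) : Y :=
  odflt P [pick z | (nat_of_ord (S P z) == 1) && (nat_of_ord (S z G) == lab)].

Lemma child_spec P G lab : nat_of_ord (S P G) = 2 -> lab < 7 -> 0 < pN 2 1 lab ->
  nat_of_ord (S P (child P G lab)) = 1 /\ nat_of_ord (S (child P G lab) G) = lab.
Proof.
move=> HPG Hl Hp; rewrite /child; case: pickP => [z /andP [/eqP -> /eqP ->] //|H].
have := Hcnt P G one7 (Ordinal Hl); rewrite /cnt HPG => E.
move: Hp; rewrite -E lt0n cards_eq0 => /set0Pn [z]; rewrite !inE => Hz.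
by move: (H z); rewrite -val_eqE in Hz; rewrite Hz.
Qed.

Lemma card_one P : #|[set z | S P z == one7]| = 3.
Proof. by rewrite -(valency_at HS) HV. Qed.

Lemma nbr3 P A B C : nat_of_ord (S P A) = 1 -> nat_of_ord (S P B) = 1 -> nat_of_ord (S P C) = 1 ->
  A != B -> A != C -> B != C ->
  forall w (j : 'I_7), (nat_of_ord (S A w) == j) + ((nat_of_ord (S B w) == j) + ((nat_of_ord (S C w) == j) + 0)) =
    #|[set z | (S P z == one7) && (S z w == j)]|.
Proof.
move=> HA HB HC nAB nAC nBC w j.
have Hset : [set z | S P z == one7] = [set z in [:: A; B; C]].
  apply/esym/eqP; rewrite eqEcard card_one; apply/andP; split.
    apply/subsetP => z; rewrite !inE => /or3P [] /eqP ->; apply/eqP; apply: val_inj => //.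
  rewrite cardsE; apply/eq_leq/esym/card_uniqP.
  by rewrite /= !inE negb_or nAB nAC nBC.
have U : uniq [:: A; B; C] by rewrite /= !inE negb_or nAB nAC nBC.
rewrite -sum_b.
transitivity (\sum_(z <- [:: A; B; C]) (S z w == j : nat)).
  by rewrite !big_cons big_nil.
rewrite big_uniq // big_mkcond /=; apply: eq_bigr => z _.
have -> : (z \in [:: A; B; C]) = (S P z == one7).
  by move/setP: Hset => /(_ z); rewrite !in_set => ->.
by case: (S P z == one7).
Qed.

Lemma cardY (y0 : Y) : #|Y| = 24.
Proof.
rewrite -sum1_card.
rewrite (eq_bigr (fun z => \sum_(l : 'I_7) (S y0 z == l) * 1)) => [|z _]; last first.
  by rewrite -(sum_pick (S y0 z) (fun _ => 1)).
rewrite exchange_big /= -sumv -sum_ord7; apply: eq_bigr => l _.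
rewrite -HV (valency_at HS y0) -sum_b; apply: eq_bigr => z _; by rewrite muln1.
Qed.
Variable y0 : Y.
Definition NB0 := enum [set z | S y0 z == one7].
Lemma sizeNB0 : size NB0 = 3. Proof. by rewrite -cardE card_one. Qed.
Lemma L0n k : k < 3 -> nat_of_ord (S y0 (nth y0 NB0 k)) = 1.
Proof. move=> Hk; have : nth y0 NB0 k \in NB0 by rewrite mem_nth // sizeNB0. by rewrite mem_enum inE => /eqP ->. Qed.
Lemma NBn a b : a < 3 -> b < 3 -> a != b -> nth y0 NB0 a != nth y0 NB0 b.
Proof. by move=> Ha Hb Hab; rewrite nth_uniq ?sizeNB0 // enum_uniq. Qed.
Definition e0 := y0.
Definition e1 := nth y0 NB0 0.
Definition e2 := nth y0 NB0 1.
Definition e3 := nth y0 NB0 2.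
Lemma L0_1 : nat_of_ord (S e0 e1) = 1. Proof. exact: L0n. Qed.
Lemma L0_2 : nat_of_ord (S e0 e2) = 1. Proof. exact: L0n. Qed.
Lemma L0_3 : nat_of_ord (S e0 e3) = 1. Proof. exact: L0n. Qed.
Lemma N_1_2 : e1 != e2. Proof. exact: NBn. Qed.
Lemma L_1_2 : nat_of_ord (S e1 e2) = 2. Proof. exact: (two_step' (symN L0_1) L0_2 N_1_2). Qed.
Lemma N_1_3 : e1 != e3. Proof. exact: NBn. Qed.
Lemma L_1_3 : nat_of_ord (S e1 e3) = 2. Proof. exact: (two_step' (symN L0_1) L0_3 N_1_3). Qed.
Lemma N_2_1 : e2 != e1. Proof. exact: NBn. Qed.
Lemma L_2_1 : nat_of_ord (S e2 e1) = 2. Proof. exact: (two_step' (symN L0_2) L0_1 N_2_1). Qed.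
Lemma N_2_3 : e2 != e3. Proof. exact: NBn. Qed.
Lemma L_2_3 : nat_of_ord (S e2 e3) = 2. Proof. exact: (two_step' (symN L0_2) L0_3 N_2_3). Qed.
Lemma N_3_1 : e3 != e1. Proof. exact: NBn. Qed.
Lemma L_3_1 : nat_of_ord (S e3 e1) = 2. Proof. exact: (two_step' (symN L0_3) L0_1 N_3_1). Qed.
Lemma N_3_2 : e3 != e2. Proof. exact: NBn. Qed.
Lemma L_3_2 : nat_of_ord (S e3 e2) = 2. Proof. exact: (two_step' (symN L0_3) L0_2 N_3_2). Qed.
Definition e4 := child e1 e2 3.
Lemma F_4 : nat_of_ord (S e1 e4) = 1 /\ nat_of_ord (S e4 e2) = 3.
Proof. exact: (@child_spec e1 e2 3 L_1_2 isT isT). Qed.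
Lemma G_4 : nat_of_ord (S e4 e0) = 2.
Proof. apply: (two_step (w := e2)); [exact: (symN (proj1 F_4)) | exact: (symN L0_1) | by rewrite (proj2 F_4) L0_2]. Qed.
Definition e5 := child e1 e2 4.
Lemma F_5 : nat_of_ord (S e1 e5) = 1 /\ nat_of_ord (S e5 e2) = 4.
Proof. exact: (@child_spec e1 e2 4 L_1_2 isT isT). Qed.
Lemma G_5 : nat_of_ord (S e5 e0) = 2.
Proof. apply: (two_step (w := e2)); [exact: (symN (proj1 F_5)) | exact: (symN L0_1) | by rewrite (proj2 F_5) L0_2]. Qed.
Definition e6 := child e2 e3 3.
Lemma F_6 : nat_of_ord (S e2 e6) = 1 /\ nat_of_ord (S e6 e3) = 3.
Proof. exact: (@child_spec e2 e3 3 L_2_3 isT isT). Qed.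
Lemma G_6 : nat_of_ord (S e6 e0) = 2.
Proof. apply: (two_step (w := e3)); [exact: (symN (proj1 F_6)) | exact: (symN L0_2) | by rewrite (proj2 F_6) L0_3]. Qed.
Definition e7 := child e2 e3 4.
Lemma F_7 : nat_of_ord (S e2 e7) = 1 /\ nat_of_ord (S e7 e3) = 4.
Proof. exact: (@child_spec e2 e3 4 L_2_3 isT isT). Qed.
Lemma G_7 : nat_of_ord (S e7 e0) = 2.
Proof. apply: (two_step (w := e3)); [exact: (symN (proj1 F_7)) | exact: (symN L0_2) | by rewrite (proj2 F_7) L0_3]. Qed.
Definition e8 := child e3 e1 3.
Lemma F_8 : nat_of_ord (S e3 e8) = 1 /\ nat_of_ord (S e8 e1) = 3.
Proof. exact: (@child_spec e3 e1 3 L_3_1 isT isT). Qed.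
Lemma G_8 : nat_of_ord (S e8 e0) = 2.
Proof. apply: (two_step (w := e1)); [exact: (symN (proj1 F_8)) | exact: (symN L0_3) | by rewrite (proj2 F_8) L0_1]. Qed.
Definition e9 := child e3 e1 4.
Lemma F_9 : nat_of_ord (S e3 e9) = 1 /\ nat_of_ord (S e9 e1) = 4.
Proof. exact: (@child_spec e3 e1 4 L_3_1 isT isT). Qed.
Lemma G_9 : nat_of_ord (S e9 e0) = 2.
Proof. apply: (two_step (w := e1)); [exact: (symN (proj1 F_9)) | exact: (symN L0_3) | by rewrite (proj2 F_9) L0_1]. Qed.
Definition e10 := child e4 e0 3.
Lemma F_10 : nat_of_ord (S e4 e10) = 1 /\ nat_of_ord (S e10 e0) = 3.
Proof. exact: (@child_spec e4 e0 3 G_4 isT isT). Qed.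
Lemma G_10 : nat_of_ord (S e10 e1) = 2.
Proof. apply: (two_step (w := e0)); [exact: (symN (proj1 F_10)) | exact: (symN (proj1 F_4)) | by rewrite (proj2 F_10) (symN L0_1)]. Qed.
Definition e11 := child e4 e0 4.
Lemma F_11 : nat_of_ord (S e4 e11) = 1 /\ nat_of_ord (S e11 e0) = 4.
Proof. exact: (@child_spec e4 e0 4 G_4 isT isT). Qed.
Lemma G_11 : nat_of_ord (S e11 e1) = 2.
Proof. apply: (two_step (w := e0)); [exact: (symN (proj1 F_11)) | exact: (symN (proj1 F_4)) | by rewrite (proj2 F_11) (symN L0_1)]. Qed.
Definition e12 := child e5 e0 3.
Lemma F_12 : nat_of_ord (S e5 e12) = 1 /\ nat_of_ord (S e12 e0) = 3.
Proof. exact: (@child_spec e5 e0 3 G_5 isT isT). Qed.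
Lemma G_12 : nat_of_ord (S e12 e1) = 2.
Proof. apply: (two_step (w := e0)); [exact: (symN (proj1 F_12)) | exact: (symN (proj1 F_5)) | by rewrite (proj2 F_12) (symN L0_1)]. Qed.
Definition e13 := child e5 e0 4.
Lemma F_13 : nat_of_ord (S e5 e13) = 1 /\ nat_of_ord (S e13 e0) = 4.
Proof. exact: (@child_spec e5 e0 4 G_5 isT isT). Qed.
Lemma G_13 : nat_of_ord (S e13 e1) = 2.
Proof. apply: (two_step (w := e0)); [exact: (symN (proj1 F_13)) | exact: (symN (proj1 F_5)) | by rewrite (proj2 F_13) (symN L0_1)]. Qed.
Definition e14 := child e6 e0 3.
Lemma F_14 : nat_of_ord (S e6 e14) = 1 /\ nat_of_ord (S e14 e0) = 3.
Proof. exact: (@child_spec e6 e0 3 G_6 isT isT). Qed.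
Lemma G_14 : nat_of_ord (S e14 e2) = 2.
Proof. apply: (two_step (w := e0)); [exact: (symN (proj1 F_14)) | exact: (symN (proj1 F_6)) | by rewrite (proj2 F_14) (symN L0_2)]. Qed.
Definition e15 := child e6 e0 4.
Lemma F_15 : nat_of_ord (S e6 e15) = 1 /\ nat_of_ord (S e15 e0) = 4.
Proof. exact: (@child_spec e6 e0 4 G_6 isT isT). Qed.
Lemma G_15 : nat_of_ord (S e15 e2) = 2.
Proof. apply: (two_step (w := e0)); [exact: (symN (proj1 F_15)) | exact: (symN (proj1 F_6)) | by rewrite (proj2 F_15) (symN L0_2)]. Qed.
Definition e16 := child e7 e0 3.
Lemma F_16 : nat_of_ord (S e7 e16) = 1 /\ nat_of_ord (S e16 e0) = 3.
Proof. exact: (@child_spec e7 e0 3 G_7 isT isT). Qed.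
Lemma G_16 : nat_of_ord (S e16 e2) = 2.
Proof. apply: (two_step (w := e0)); [exact: (symN (proj1 F_16)) | exact: (symN (proj1 F_7)) | by rewrite (proj2 F_16) (symN L0_2)]. Qed.
Definition e17 := child e7 e0 4.
Lemma F_17 : nat_of_ord (S e7 e17) = 1 /\ nat_of_ord (S e17 e0) = 4.
Proof. exact: (@child_spec e7 e0 4 G_7 isT isT). Qed.
Lemma G_17 : nat_of_ord (S e17 e2) = 2.
Proof. apply: (two_step (w := e0)); [exact: (symN (proj1 F_17)) | exact: (symN (proj1 F_7)) | by rewrite (proj2 F_17) (symN L0_2)]. Qed.
Definition e18 := child e8 e0 3.
Lemma F_18 : nat_of_ord (S e8 e18) = 1 /\ nat_of_ord (S e18 e0) = 3.
Proof. exact: (@child_spec e8 e0 3 G_8 isT isT). Qed.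
Lemma G_18 : nat_of_ord (S e18 e3) = 2.
Proof. apply: (two_step (w := e0)); [exact: (symN (proj1 F_18)) | exact: (symN (proj1 F_8)) | by rewrite (proj2 F_18) (symN L0_3)]. Qed.
Definition e19 := child e8 e0 4.
Lemma F_19 : nat_of_ord (S e8 e19) = 1 /\ nat_of_ord (S e19 e0) = 4.
Proof. exact: (@child_spec e8 e0 4 G_8 isT isT). Qed.
Lemma G_19 : nat_of_ord (S e19 e3) = 2.
Proof. apply: (two_step (w := e0)); [exact: (symN (proj1 F_19)) | exact: (symN (proj1 F_8)) | by rewrite (proj2 F_19) (symN L0_3)]. Qed.
Definition e20 := child e9 e0 3.
Lemma F_20 : nat_of_ord (S e9 e20) = 1 /\ nat_of_ord (S e20 e0) = 3.
Proof. exact: (@child_spec e9 e0 3 G_9 isT isT). Qed.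
Lemma G_20 : nat_of_ord (S e20 e3) = 2.
Proof. apply: (two_step (w := e0)); [exact: (symN (proj1 F_20)) | exact: (symN (proj1 F_9)) | by rewrite (proj2 F_20) (symN L0_3)]. Qed.
Definition e21 := child e9 e0 4.
Lemma F_21 : nat_of_ord (S e9 e21) = 1 /\ nat_of_ord (S e21 e0) = 4.
Proof. exact: (@child_spec e9 e0 4 G_9 isT isT). Qed.
Lemma G_21 : nat_of_ord (S e21 e3) = 2.
Proof. apply: (two_step (w := e0)); [exact: (symN (proj1 F_21)) | exact: (symN (proj1 F_9)) | by rewrite (proj2 F_21) (symN L0_3)]. Qed.
Definition e22 := child e10 e1 3.
Lemma F_22 : nat_of_ord (S e10 e22) = 1 /\ nat_of_ord (S e22 e1) = 3.
Proof. exact: (@child_spec e10 e1 3 G_10 isT isT). Qed.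
Lemma G_22 : nat_of_ord (S e22 e4) = 2.
Proof. apply: (two_step (w := e1)); [exact: (symN (proj1 F_22)) | exact: (symN (proj1 F_10)) | by rewrite (proj2 F_22) (symN (proj1 F_4))]. Qed.
Definition e23 := child e10 e1 4.
Lemma F_23 : nat_of_ord (S e10 e23) = 1 /\ nat_of_ord (S e23 e1) = 4.
Proof. exact: (@child_spec e10 e1 4 G_10 isT isT). Qed.
Lemma G_23 : nat_of_ord (S e23 e4) = 2.
Proof. apply: (two_step (w := e1)); [exact: (symN (proj1 F_23)) | exact: (symN (proj1 F_10)) | by rewrite (proj2 F_23) (symN (proj1 F_4))]. Qed.
Definition e24 := child e11 e1 3.
Lemma F_24 : nat_of_ord (S e11 e24) = 1 /\ nat_of_ord (S e24 e1) = 3.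
Proof. exact: (@child_spec e11 e1 3 G_11 isT isT). Qed.
Lemma G_24 : nat_of_ord (S e24 e4) = 2.
Proof. apply: (two_step (w := e1)); [exact: (symN (proj1 F_24)) | exact: (symN (proj1 F_11)) | by rewrite (proj2 F_24) (symN (proj1 F_4))]. Qed.
Definition e25 := child e11 e1 4.
Lemma F_25 : nat_of_ord (S e11 e25) = 1 /\ nat_of_ord (S e25 e1) = 4.
Proof. exact: (@child_spec e11 e1 4 G_11 isT isT). Qed.
Lemma G_25 : nat_of_ord (S e25 e4) = 2.
Proof. apply: (two_step (w := e1)); [exact: (symN (proj1 F_25)) | exact: (symN (proj1 F_11)) | by rewrite (proj2 F_25) (symN (proj1 F_4))]. Qed.
Definition e26 := child e12 e1 3.
Lemma F_26 : nat_of_ord (S e12 e26) = 1 /\ nat_of_ord (S e26 e1) = 3.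
Proof. exact: (@child_spec e12 e1 3 G_12 isT isT). Qed.
Lemma G_26 : nat_of_ord (S e26 e5) = 2.
Proof. apply: (two_step (w := e1)); [exact: (symN (proj1 F_26)) | exact: (symN (proj1 F_12)) | by rewrite (proj2 F_26) (symN (proj1 F_5))]. Qed.
Definition e27 := child e12 e1 4.
Lemma F_27 : nat_of_ord (S e12 e27) = 1 /\ nat_of_ord (S e27 e1) = 4.
Proof. exact: (@child_spec e12 e1 4 G_12 isT isT). Qed.
Lemma G_27 : nat_of_ord (S e27 e5) = 2.
Proof. apply: (two_step (w := e1)); [exact: (symN (proj1 F_27)) | exact: (symN (proj1 F_12)) | by rewrite (proj2 F_27) (symN (proj1 F_5))]. Qed.
Definition e28 := child e13 e1 3.
Lemma F_28 : nat_of_ord (S e13 e28) = 1 /\ nat_of_ord (S e28 e1) = 3.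
Proof. exact: (@child_spec e13 e1 3 G_13 isT isT). Qed.
Lemma G_28 : nat_of_ord (S e28 e5) = 2.
Proof. apply: (two_step (w := e1)); [exact: (symN (proj1 F_28)) | exact: (symN (proj1 F_13)) | by rewrite (proj2 F_28) (symN (proj1 F_5))]. Qed.
Definition e29 := child e13 e1 4.
Lemma F_29 : nat_of_ord (S e13 e29) = 1 /\ nat_of_ord (S e29 e1) = 4.
Proof. exact: (@child_spec e13 e1 4 G_13 isT isT). Qed.
Lemma G_29 : nat_of_ord (S e29 e5) = 2.
Proof. apply: (two_step (w := e1)); [exact: (symN (proj1 F_29)) | exact: (symN (proj1 F_13)) | by rewrite (proj2 F_29) (symN (proj1 F_5))]. Qed.
Definition e30 := child e14 e2 3.
Lemma F_30 : nat_of_ord (S e14 e30) = 1 /\ nat_of_ord (S e30 e2) = 3.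
Proof. exact: (@child_spec e14 e2 3 G_14 isT isT). Qed.
Lemma G_30 : nat_of_ord (S e30 e6) = 2.
Proof. apply: (two_step (w := e2)); [exact: (symN (proj1 F_30)) | exact: (symN (proj1 F_14)) | by rewrite (proj2 F_30) (symN (proj1 F_6))]. Qed.
Definition e31 := child e14 e2 4.
Lemma F_31 : nat_of_ord (S e14 e31) = 1 /\ nat_of_ord (S e31 e2) = 4.
Proof. exact: (@child_spec e14 e2 4 G_14 isT isT). Qed.
Lemma G_31 : nat_of_ord (S e31 e6) = 2.
Proof. apply: (two_step (w := e2)); [exact: (symN (proj1 F_31)) | exact: (symN (proj1 F_14)) | by rewrite (proj2 F_31) (symN (proj1 F_6))]. Qed.
Definition e32 := child e15 e2 3.
Lemma F_32 : nat_of_ord (S e15 e32) = 1 /\ nat_of_ord (S e32 e2) = 3.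
Proof. exact: (@child_spec e15 e2 3 G_15 isT isT). Qed.
Lemma G_32 : nat_of_ord (S e32 e6) = 2.
Proof. apply: (two_step (w := e2)); [exact: (symN (proj1 F_32)) | exact: (symN (proj1 F_15)) | by rewrite (proj2 F_32) (symN (proj1 F_6))]. Qed.
Definition e33 := child e15 e2 4.
Lemma F_33 : nat_of_ord (S e15 e33) = 1 /\ nat_of_ord (S e33 e2) = 4.
Proof. exact: (@child_spec e15 e2 4 G_15 isT isT). Qed.
Lemma G_33 : nat_of_ord (S e33 e6) = 2.
Proof. apply: (two_step (w := e2)); [exact: (symN (proj1 F_33)) | exact: (symN (proj1 F_15)) | by rewrite (proj2 F_33) (symN (proj1 F_6))]. Qed.
Definition e34 := child e16 e2 3.
Lemma F_34 : nat_of_ord (S e16 e34) = 1 /\ nat_of_ord (S e34 e2) = 3.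
Proof. exact: (@child_spec e16 e2 3 G_16 isT isT). Qed.
Lemma G_34 : nat_of_ord (S e34 e7) = 2.
Proof. apply: (two_step (w := e2)); [exact: (symN (proj1 F_34)) | exact: (symN (proj1 F_16)) | by rewrite (proj2 F_34) (symN (proj1 F_7))]. Qed.
Definition e35 := child e16 e2 4.
Lemma F_35 : nat_of_ord (S e16 e35) = 1 /\ nat_of_ord (S e35 e2) = 4.
Proof. exact: (@child_spec e16 e2 4 G_16 isT isT). Qed.
Lemma G_35 : nat_of_ord (S e35 e7) = 2.
Proof. apply: (two_step (w := e2)); [exact: (symN (proj1 F_35)) | exact: (symN (proj1 F_16)) | by rewrite (proj2 F_35) (symN (proj1 F_7))]. Qed.
Definition e36 := child e17 e2 3.
Lemma F_36 : nat_of_ord (S e17 e36) = 1 /\ nat_of_ord (S e36 e2) = 3.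
Proof. exact: (@child_spec e17 e2 3 G_17 isT isT). Qed.
Lemma G_36 : nat_of_ord (S e36 e7) = 2.
Proof. apply: (two_step (w := e2)); [exact: (symN (proj1 F_36)) | exact: (symN (proj1 F_17)) | by rewrite (proj2 F_36) (symN (proj1 F_7))]. Qed.
Definition e37 := child e17 e2 4.
Lemma F_37 : nat_of_ord (S e17 e37) = 1 /\ nat_of_ord (S e37 e2) = 4.
Proof. exact: (@child_spec e17 e2 4 G_17 isT isT). Qed.
Lemma G_37 : nat_of_ord (S e37 e7) = 2.
Proof. apply: (two_step (w := e2)); [exact: (symN (proj1 F_37)) | exact: (symN (proj1 F_17)) | by rewrite (proj2 F_37) (symN (proj1 F_7))]. Qed.
Definition e38 := child e18 e3 3.
Lemma F_38 : nat_of_ord (S e18 e38) = 1 /\ nat_of_ord (S e38 e3) = 3.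
Proof. exact: (@child_spec e18 e3 3 G_18 isT isT). Qed.
Lemma G_38 : nat_of_ord (S e38 e8) = 2.
Proof. apply: (two_step (w := e3)); [exact: (symN (proj1 F_38)) | exact: (symN (proj1 F_18)) | by rewrite (proj2 F_38) (symN (proj1 F_8))]. Qed.
Definition e39 := child e18 e3 4.
Lemma F_39 : nat_of_ord (S e18 e39) = 1 /\ nat_of_ord (S e39 e3) = 4.
Proof. exact: (@child_spec e18 e3 4 G_18 isT isT). Qed.
Lemma G_39 : nat_of_ord (S e39 e8) = 2.
Proof. apply: (two_step (w := e3)); [exact: (symN (proj1 F_39)) | exact: (symN (proj1 F_18)) | by rewrite (proj2 F_39) (symN (proj1 F_8))]. Qed.
Definition e40 := child e19 e3 3.
Lemma F_40 : nat_of_ord (S e19 e40) = 1 /\ nat_of_ord (S e40 e3) = 3.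
Proof. exact: (@child_spec e19 e3 3 G_19 isT isT). Qed.
Lemma G_40 : nat_of_ord (S e40 e8) = 2.
Proof. apply: (two_step (w := e3)); [exact: (symN (proj1 F_40)) | exact: (symN (proj1 F_19)) | by rewrite (proj2 F_40) (symN (proj1 F_8))]. Qed.
Definition e41 := child e19 e3 4.
Lemma F_41 : nat_of_ord (S e19 e41) = 1 /\ nat_of_ord (S e41 e3) = 4.
Proof. exact: (@child_spec e19 e3 4 G_19 isT isT). Qed.
Lemma G_41 : nat_of_ord (S e41 e8) = 2.
Proof. apply: (two_step (w := e3)); [exact: (symN (proj1 F_41)) | exact: (symN (proj1 F_19)) | by rewrite (proj2 F_41) (symN (proj1 F_8))]. Qed.
Definition e42 := child e20 e3 3.
Lemma F_42 : nat_of_ord (S e20 e42) = 1 /\ nat_of_ord (S e42 e3) = 3.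
Proof. exact: (@child_spec e20 e3 3 G_20 isT isT). Qed.
Lemma G_42 : nat_of_ord (S e42 e9) = 2.
Proof. apply: (two_step (w := e3)); [exact: (symN (proj1 F_42)) | exact: (symN (proj1 F_20)) | by rewrite (proj2 F_42) (symN (proj1 F_9))]. Qed.
Definition e43 := child e20 e3 4.
Lemma F_43 : nat_of_ord (S e20 e43) = 1 /\ nat_of_ord (S e43 e3) = 4.
Proof. exact: (@child_spec e20 e3 4 G_20 isT isT). Qed.
Lemma G_43 : nat_of_ord (S e43 e9) = 2.
Proof. apply: (two_step (w := e3)); [exact: (symN (proj1 F_43)) | exact: (symN (proj1 F_20)) | by rewrite (proj2 F_43) (symN (proj1 F_9))]. Qed.
Definition e44 := child e21 e3 3.
Lemma F_44 : nat_of_ord (S e21 e44) = 1 /\ nat_of_ord (S e44 e3) = 3.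
Proof. exact: (@child_spec e21 e3 3 G_21 isT isT). Qed.
Lemma G_44 : nat_of_ord (S e44 e9) = 2.
Proof. apply: (two_step (w := e3)); [exact: (symN (proj1 F_44)) | exact: (symN (proj1 F_21)) | by rewrite (proj2 F_44) (symN (proj1 F_9))]. Qed.
Definition e45 := child e21 e3 4.
Lemma F_45 : nat_of_ord (S e21 e45) = 1 /\ nat_of_ord (S e45 e3) = 4.
Proof. exact: (@child_spec e21 e3 4 G_21 isT isT). Qed.
Lemma G_45 : nat_of_ord (S e45 e9) = 2.
Proof. apply: (two_step (w := e3)); [exact: (symN (proj1 F_45)) | exact: (symN (proj1 F_21)) | by rewrite (proj2 F_45) (symN (proj1 F_9))]. Qed.
Definition elist := [:: e0; e1; e2; e3; e4; e5; e6; e7; e8; e9; e10; e11; e12; e13; e14; e15; e16; e17; e18; e19; e20; e21; e22; e23; e24; e25; e26; e27; e28; e29; e30; e31; e32; e33; e34; e35; e36; e37; e38; e39; e40; e41; e42; e43; e44; e45].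
Definition env (n : nat) : Y := nth y0 elist n.
Lemma NB_0 : NBOK S env 0 [:: 1; 2; 3].
Proof. move=> w j; exact: (nbr3 L0_1 L0_2 L0_3 N_1_2 N_1_3 N_2_3 w j). Qed.
Lemma NB_1 : NBOK S env 1 [:: 0; 4; 5].
Proof.
have nab : e0 != e4 by apply: (neqW (w := e2)); rewrite L0_2 (proj2 F_4).
have nac : e0 != e5 by apply: (neqW (w := e2)); rewrite L0_2 (proj2 F_5).
have nbc : e4 != e5 by apply: (neqW (w := e2)); rewrite (proj2 F_4) (proj2 F_5).
move=> w j; exact: (nbr3 (symN L0_1) (proj1 F_4) (proj1 F_5) nab nac nbc w j). Qed.
Lemma NB_2 : NBOK S env 2 [:: 0; 6; 7].
Proof.
have nab : e0 != e6 by apply: (neqW (w := e3)); rewrite L0_3 (proj2 F_6).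
have nac : e0 != e7 by apply: (neqW (w := e3)); rewrite L0_3 (proj2 F_7).
have nbc : e6 != e7 by apply: (neqW (w := e3)); rewrite (proj2 F_6) (proj2 F_7).
move=> w j; exact: (nbr3 (symN L0_2) (proj1 F_6) (proj1 F_7) nab nac nbc w j). Qed.
Lemma NB_3 : NBOK S env 3 [:: 0; 8; 9].
Proof.
have nab : e0 != e8 by apply: (neqW (w := e1)); rewrite L0_1 (proj2 F_8).
have nac : e0 != e9 by apply: (neqW (w := e1)); rewrite L0_1 (proj2 F_9).
have nbc : e8 != e9 by apply: (neqW (w := e1)); rewrite (proj2 F_8) (proj2 F_9).
move=> w j; exact: (nbr3 (symN L0_3) (proj1 F_8) (proj1 F_9) nab nac nbc w j). Qed.
Lemma NB_4 : NBOK S env 4 [:: 1; 10; 11].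
Proof.
have nab : e1 != e10 by apply: (neqW (w := e0)); rewrite (symN L0_1) (proj2 F_10).
have nac : e1 != e11 by apply: (neqW (w := e0)); rewrite (symN L0_1) (proj2 F_11).
have nbc : e10 != e11 by apply: (neqW (w := e0)); rewrite (proj2 F_10) (proj2 F_11).
move=> w j; exact: (nbr3 (symN (proj1 F_4)) (proj1 F_10) (proj1 F_11) nab nac nbc w j). Qed.
Lemma NB_5 : NBOK S env 5 [:: 1; 12; 13].
Proof.
have nab : e1 != e12 by apply: (neqW (w := e0)); rewrite (symN L0_1) (proj2 F_12).
have nac : e1 != e13 by apply: (neqW (w := e0)); rewrite (symN L0_1) (proj2 F_13).
have nbc : e12 != e13 by apply: (neqW (w := e0)); rewrite (proj2 F_12) (proj2 F_13).
move=> w j; exact: (nbr3 (symN (proj1 F_5)) (proj1 F_12) (proj1 F_13) nab nac nbc w j). Qed.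
Lemma NB_6 : NBOK S env 6 [:: 2; 14; 15].
Proof.
have nab : e2 != e14 by apply: (neqW (w := e0)); rewrite (symN L0_2) (proj2 F_14).
have nac : e2 != e15 by apply: (neqW (w := e0)); rewrite (symN L0_2) (proj2 F_15).
have nbc : e14 != e15 by apply: (neqW (w := e0)); rewrite (proj2 F_14) (proj2 F_15).
move=> w j; exact: (nbr3 (symN (proj1 F_6)) (proj1 F_14) (proj1 F_15) nab nac nbc w j). Qed.
Lemma NB_7 : NBOK S env 7 [:: 2; 16; 17].
Proof.
have nab : e2 != e16 by apply: (neqW (w := e0)); rewrite (symN L0_2) (proj2 F_16).
have nac : e2 != e17 by apply: (neqW (w := e0)); rewrite (symN L0_2) (proj2 F_17).
have nbc : e16 != e17 by apply: (neqW (w := e0)); rewrite (proj2 F_16) (proj2 F_17).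
move=> w j; exact: (nbr3 (symN (proj1 F_7)) (proj1 F_16) (proj1 F_17) nab nac nbc w j). Qed.
Lemma NB_8 : NBOK S env 8 [:: 3; 18; 19].
Proof.
have nab : e3 != e18 by apply: (neqW (w := e0)); rewrite (symN L0_3) (proj2 F_18).
have nac : e3 != e19 by apply: (neqW (w := e0)); rewrite (symN L0_3) (proj2 F_19).
have nbc : e18 != e19 by apply: (neqW (w := e0)); rewrite (proj2 F_18) (proj2 F_19).
move=> w j; exact: (nbr3 (symN (proj1 F_8)) (proj1 F_18) (proj1 F_19) nab nac nbc w j). Qed.
Lemma NB_9 : NBOK S env 9 [:: 3; 20; 21].
Proof.
have nab : e3 != e20 by apply: (neqW (w := e0)); rewrite (symN L0_3) (proj2 F_20).
have nac : e3 != e21 by apply: (neqW (w := e0)); rewrite (symN L0_3) (proj2 F_21).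
have nbc : e20 != e21 by apply: (neqW (w := e0)); rewrite (proj2 F_20) (proj2 F_21).
move=> w j; exact: (nbr3 (symN (proj1 F_9)) (proj1 F_20) (proj1 F_21) nab nac nbc w j). Qed.
Lemma NB_10 : NBOK S env 10 [:: 4; 22; 23].
Proof.
have nab : e4 != e22 by apply: (neqW (w := e1)); rewrite (symN (proj1 F_4)) (proj2 F_22).
have nac : e4 != e23 by apply: (neqW (w := e1)); rewrite (symN (proj1 F_4)) (proj2 F_23).
have nbc : e22 != e23 by apply: (neqW (w := e1)); rewrite (proj2 F_22) (proj2 F_23).
move=> w j; exact: (nbr3 (symN (proj1 F_10)) (proj1 F_22) (proj1 F_23) nab nac nbc w j). Qed.
Lemma NB_11 : NBOK S env 11 [:: 4; 24; 25].
Proof.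
have nab : e4 != e24 by apply: (neqW (w := e1)); rewrite (symN (proj1 F_4)) (proj2 F_24).
have nac : e4 != e25 by apply: (neqW (w := e1)); rewrite (symN (proj1 F_4)) (proj2 F_25).
have nbc : e24 != e25 by apply: (neqW (w := e1)); rewrite (proj2 F_24) (proj2 F_25).
move=> w j; exact: (nbr3 (symN (proj1 F_11)) (proj1 F_24) (proj1 F_25) nab nac nbc w j). Qed.
Lemma NB_12 : NBOK S env 12 [:: 5; 26; 27].
Proof.
have nab : e5 != e26 by apply: (neqW (w := e1)); rewrite (symN (proj1 F_5)) (proj2 F_26).
have nac : e5 != e27 by apply: (neqW (w := e1)); rewrite (symN (proj1 F_5)) (proj2 F_27).
have nbc : e26 != e27 by apply: (neqW (w := e1)); rewrite (proj2 F_26) (proj2 F_27).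
move=> w j; exact: (nbr3 (symN (proj1 F_12)) (proj1 F_26) (proj1 F_27) nab nac nbc w j). Qed.
Lemma NB_13 : NBOK S env 13 [:: 5; 28; 29].
Proof.
have nab : e5 != e28 by apply: (neqW (w := e1)); rewrite (symN (proj1 F_5)) (proj2 F_28).
have nac : e5 != e29 by apply: (neqW (w := e1)); rewrite (symN (proj1 F_5)) (proj2 F_29).
have nbc : e28 != e29 by apply: (neqW (w := e1)); rewrite (proj2 F_28) (proj2 F_29).
move=> w j; exact: (nbr3 (symN (proj1 F_13)) (proj1 F_28) (proj1 F_29) nab nac nbc w j). Qed.
Lemma NB_14 : NBOK S env 14 [:: 6; 30; 31].
Proof.
have nab : e6 != e30 by apply: (neqW (w := e2)); rewrite (symN (proj1 F_6)) (proj2 F_30).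
have nac : e6 != e31 by apply: (neqW (w := e2)); rewrite (symN (proj1 F_6)) (proj2 F_31).
have nbc : e30 != e31 by apply: (neqW (w := e2)); rewrite (proj2 F_30) (proj2 F_31).
move=> w j; exact: (nbr3 (symN (proj1 F_14)) (proj1 F_30) (proj1 F_31) nab nac nbc w j). Qed.
Lemma NB_15 : NBOK S env 15 [:: 6; 32; 33].
Proof.
have nab : e6 != e32 by apply: (neqW (w := e2)); rewrite (symN (proj1 F_6)) (proj2 F_32).
have nac : e6 != e33 by apply: (neqW (w := e2)); rewrite (symN (proj1 F_6)) (proj2 F_33).
have nbc : e32 != e33 by apply: (neqW (w := e2)); rewrite (proj2 F_32) (proj2 F_33).
move=> w j; exact: (nbr3 (symN (proj1 F_15)) (proj1 F_32) (proj1 F_33) nab nac nbc w j). Qed.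
Lemma NB_16 : NBOK S env 16 [:: 7; 34; 35].
Proof.
have nab : e7 != e34 by apply: (neqW (w := e2)); rewrite (symN (proj1 F_7)) (proj2 F_34).
have nac : e7 != e35 by apply: (neqW (w := e2)); rewrite (symN (proj1 F_7)) (proj2 F_35).
have nbc : e34 != e35 by apply: (neqW (w := e2)); rewrite (proj2 F_34) (proj2 F_35).
move=> w j; exact: (nbr3 (symN (proj1 F_16)) (proj1 F_34) (proj1 F_35) nab nac nbc w j). Qed.
Lemma NB_17 : NBOK S env 17 [:: 7; 36; 37].
Proof.
have nab : e7 != e36 by apply: (neqW (w := e2)); rewrite (symN (proj1 F_7)) (proj2 F_36).
have nac : e7 != e37 by apply: (neqW (w := e2)); rewrite (symN (proj1 F_7)) (proj2 F_37).
have nbc : e36 != e37 by apply: (neqW (w := e2)); rewrite (proj2 F_36) (proj2 F_37).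
move=> w j; exact: (nbr3 (symN (proj1 F_17)) (proj1 F_36) (proj1 F_37) nab nac nbc w j). Qed.
Lemma NB_18 : NBOK S env 18 [:: 8; 38; 39].
Proof.
have nab : e8 != e38 by apply: (neqW (w := e3)); rewrite (symN (proj1 F_8)) (proj2 F_38).
have nac : e8 != e39 by apply: (neqW (w := e3)); rewrite (symN (proj1 F_8)) (proj2 F_39).
have nbc : e38 != e39 by apply: (neqW (w := e3)); rewrite (proj2 F_38) (proj2 F_39).
move=> w j; exact: (nbr3 (symN (proj1 F_18)) (proj1 F_38) (proj1 F_39) nab nac nbc w j). Qed.
Lemma NB_19 : NBOK S env 19 [:: 8; 40; 41].
Proof.
have nab : e8 != e40 by apply: (neqW (w := e3)); rewrite (symN (proj1 F_8)) (proj2 F_40).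
have nac : e8 != e41 by apply: (neqW (w := e3)); rewrite (symN (proj1 F_8)) (proj2 F_41).
have nbc : e40 != e41 by apply: (neqW (w := e3)); rewrite (proj2 F_40) (proj2 F_41).
move=> w j; exact: (nbr3 (symN (proj1 F_19)) (proj1 F_40) (proj1 F_41) nab nac nbc w j). Qed.
Lemma NB_20 : NBOK S env 20 [:: 9; 42; 43].
Proof.
have nab : e9 != e42 by apply: (neqW (w := e3)); rewrite (symN (proj1 F_9)) (proj2 F_42).
have nac : e9 != e43 by apply: (neqW (w := e3)); rewrite (symN (proj1 F_9)) (proj2 F_43).
have nbc : e42 != e43 by apply: (neqW (w := e3)); rewrite (proj2 F_42) (proj2 F_43).
move=> w j; exact: (nbr3 (symN (proj1 F_20)) (proj1 F_42) (proj1 F_43) nab nac nbc w j). Qed.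
Lemma NB_21 : NBOK S env 21 [:: 9; 44; 45].
Proof.
have nab : e9 != e44 by apply: (neqW (w := e3)); rewrite (symN (proj1 F_9)) (proj2 F_44).
have nac : e9 != e45 by apply: (neqW (w := e3)); rewrite (symN (proj1 F_9)) (proj2 F_45).
have nbc : e44 != e45 by apply: (neqW (w := e3)); rewrite (proj2 F_44) (proj2 F_45).
move=> w j; exact: (nbr3 (symN (proj1 F_21)) (proj1 F_44) (proj1 F_45) nab nac nbc w j). Qed.
Lemma nbP_ok : nbP S env nbls.
Proof. exact: (conj NB_0 (conj NB_1 (conj NB_2 (conj NB_3 (conj NB_4 (conj NB_5 (conj NB_6 (conj NB_7 (conj NB_8 (conj NB_9 (conj NB_10 (conj NB_11 (conj NB_12 (conj NB_13 (conj NB_14 (conj NB_15 (conj NB_16 (conj NB_17 (conj NB_18 (conj NB_19 (conj NB_20 (conj NB_21 I)))))))))))))))))))))). Qed.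
Lemma factsP_ok : factsP S env facts.
Proof. exact: (conj (sxx e0) (conj (sxx e1) (conj (sxx e2) (conj (sxx e3) (conj (sxx e4) (conj (sxx e5) (conj (sxx e6) (conj (sxx e7) (conj (sxx e8) (conj (sxx e9) (conj (sxx e10) (conj (sxx e11) (conj (sxx e12) (conj (sxx e13) (conj (sxx e14) (conj (sxx e15) (conj (sxx e16) (conj (sxx e17) (conj (sxx e18) (conj (sxx e19) (conj (sxx e20) (conj (sxx e21) (conj (sxx e22) (conj (sxx e23) (conj (sxx e24) (conj (sxx e25) (conj (sxx e26) (conj (sxx e27) (conj (sxx e28) (conj (sxx e29) (conj (sxx e30) (conj (sxx e31) (conj (sxx e32) (conj (sxx e33) (conj (sxx e34) (conj (sxx e35) (conj (sxx e36) (conj (sxx e37) (conj (sxx e38) (conj (sxx e39) (conj (sxx e40) (conj (sxx e41) (conj (sxx e42) (conj (sxx e43) (conj (sxx e44) (conj (sxx e45) (conj L0_1 (conj L0_2 (conj L0_3 (conj L_1_2 (conj L_1_3 (conj L_2_1 (conj L_2_3 (conj L_3_1 (conj L_3_2 (conj (symN (proj1 F_4)) (conj (proj2 F_4) (conj G_4 (conj (symN (proj1 F_5)) (conj (proj2 F_5) (conj G_5 (conj (symN (proj1 F_6)) (conj (proj2 F_6) (conj G_6 (conj (symN (proj1 F_7)) (conj (proj2 F_7) (conj G_7 (conj (symN (proj1 F_8)) (conj (proj2 F_8) (conj G_8 (conj (symN (proj1 F_9)) (conj (proj2 F_9) (conj G_9 (conj (symN (proj1 F_10)) (conj (proj2 F_10)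 (conj G_10 (conj (symN (proj1 F_11)) (conj (proj2 F_11) (conj G_11 (conj (symN (proj1 F_12)) (conj (proj2 F_12) (conj G_12 (conj (symN (proj1 F_13)) (conj (proj2 F_13) (conj G_13 (conj (symN (proj1 F_14)) (conj (proj2 F_14) (conj G_14 (conj (symN (proj1 F_15)) (conj (proj2 F_15) (conj G_15 (conj (symN (proj1 F_16)) (conj (proj2 F_16) (conj G_16 (conj (symN (proj1 F_17)) (conj (proj2 F_17) (conj G_17 (conj (symN (proj1 F_18)) (conj (proj2 F_18) (conj G_18 (conj (symN (proj1 F_19)) (conj (proj2 F_19) (conj G_19 (conj (symN (proj1 F_20)) (conj (proj2 F_20) (conj G_20 (conj (symN (proj1 F_21)) (conj (proj2 F_21) (conj G_21 (conj (symN (proj1 F_22)) (conj (proj2 F_22) (conj G_22 (conj (symN (proj1 F_23)) (conj (proj2 F_23) (conj G_23 (conj (symN (proj1 F_24)) (conj (proj2 F_24) (conj G_24 (conj (symN (proj1 F_25)) (conj (proj2 F_25) (conj G_25 (conj (symN (proj1 F_26)) (conj (proj2 F_26) (conj G_26 (conj (symN (proj1 F_27)) (conj (proj2 F_27) (conj G_27 (conj (symN (proj1 F_28)) (conj (proj2 F_28) (conj G_28 (conj (symN (proj1 F_29)) (conj (proj2 F_29) (conj G_29 (conj (symN (proj1 F_30)) (conj (proj2 F_30) (conj G_30 (conj (symN (proj1 F_31)) (conj (proj2 F_31) (conj G_31 (conj (symN (proj1 F_32)) (conj (proj2 F_32) (conj G_32 (conj (symN (proj1 F_33)) (conj (proj2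 F_33) (conj G_33 (conj (symN (proj1 F_34)) (conj (proj2 F_34) (conj G_34 (conj (symN (proj1 F_35)) (conj (proj2 F_35) (conj G_35 (conj (symN (proj1 F_36)) (conj (proj2 F_36) (conj G_36 (conj (symN (proj1 F_37)) (conj (proj2 F_37) (conj G_37 (conj (symN (proj1 F_38)) (conj (proj2 F_38) (conj G_38 (conj (symN (proj1 F_39)) (conj (proj2 F_39) (conj G_39 (conj (symN (proj1 F_40)) (conj (proj2 F_40) (conj G_40 (conj (symN (proj1 F_41)) (conj (proj2 F_41) (conj G_41 (conj (symN (proj1 F_42)) (conj (proj2 F_42) (conj G_42 (conj (symN (proj1 F_43)) (conj (proj2 F_43) (conj G_43 (conj (symN (proj1 F_44)) (conj (proj2 F_44) (conj G_44 (conj (symN (proj1 F_45)) (conj (proj2 F_45) (conj G_45 I))))))))))))))))))))))))))))))))))))))))))))))))))))))))))))))))))))))))))))))))))))))))))))))))))))))))))))))))))))))))))))))))))))))))))))))))))))))))))))))))))))))))))))))))))))). Qed.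

Lemma core_f : exists f : X -> Y, bijective f /\ forall x y, S (f x) (f y) = NR x y.
Proof.
pose f x := env (nth 0 canon (idx x)).
have Hf x y : S (f x) (f y) = NR x y.
  apply: val_inj; rewrite NR_val; exact: (fin_rel HS Hcnt factsP_ok nbP_ok x y).
exists f; split => //.
apply: inj_card_bij; last by rewrite (cardY y0) card_prod card_bool card_ord.
move=> x y E; apply/eqP; rewrite -(s_diag NR_scheme) -Hf E.
by rewrite (s_diag HS).
Qed.
End Gen.

Lemma core (Y : finType) (S : Y -> Y -> 'I_7) : is_scheme S ->
  (forall h j : 'I_7, pnum S h one7 j = pN h 1 j) ->
  (forall i : 'I_7, valency S i = pN 0 i i) ->
  exists f : X -> Y, bijective f /\ forall x y, S (f x) (f y) = NR x y.
Proof.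
move=> HS HP HV; case: (HS) => _ _ H3 _; case: (H3 ord0) => y0 _.
exact: (core_f HS HP HV y0).
Qed.

Theorem proposition3p3 (n : nat) (r : bool * 'I_12 -> bool * 'I_12 -> 'I_n.+2) :
  is_scheme r ->
  (forall x y, (r x y == i1) = gp_adj 12 5 x y) ->
  (forall (m : nat) (r' : bool * 'I_12 -> bool * 'I_12 -> 'I_m.+2),
      is_scheme r' -> (exists i, forall x y, (r' x y == i) = gp_adj 12 5 x y) ->
      n <= m) ->
  forall (Y : finType) (s : Y -> Y -> 'I_n.+2),
    is_scheme s -> same_diagram r s -> scheme_iso r s.
Proof.
move=> Hr Hedge Hmin Y s Hs [sg [sg0 sg1 Hval Hp]].
have n5 : n <= 5 by apply: (Hmin 5 NR NR_scheme); exists one7; exact: NR_adj.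
pose x0 : X := (false, ord0).
pose phi (i : 'I_n.+2) : 'I_7 :=
  if [pick p : X * X | r p.1 p.2 == i] is Some p then NR p.1 p.2 else ord0.
have phiE x y : phi (r x y) = NR x y.
  rewrite /phi; case: pickP => [p /eqP E|/(_ (x, y))]; last by rewrite /= eqxx.
  exact: (refine_NR Hr Hedge E).
pose g (j : 'I_7) : 'I_n.+2 :=
  if [pick p : X * X | NR p.1 p.2 == j] is Some p then r p.1 p.2 else ord0.
have phig j : phi (g j) = j.
  rewrite /g; case: pickP => [p /eqP E|]; first by rewrite phiE.
  case: NR_scheme => _ _ H3 _; case: (H3 j) => x [y E] /(_ (x, y)); by rewrite /= E eqxx.
have ginj : injective g by apply: (can_inj phig).
have n5' : 7 <= n.+2 by have := leq_card g ginj; rewrite !card_ord.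
have e5 : n = 5 by lia.
subst n.
have gsurj i : exists j, g j = i.
  have gbij : bijective g by apply: inj_card_bij => //; rewrite !card_ord.
  case: gbij => g' gK g'K; by exists (g' i).
have rE x y : r x y = g (NR x y).
  case: (gsurj (r x y)) => j Ej; by rewrite -phiE -Ej phig.
pose pi := perm ginj.
have piE i : pi i = g i by rewrite permE.
have pi1 : pi one7 = i1.
  pose a : X := (false, ord0); pose b : X := (false, Ordinal (isT : 1 < 12)).
  have E1 : NR a b = one7 by apply/eqP; rewrite NR_adj.
  have E2 : r a b = i1 by apply/eqP; rewrite Hedge.
  by rewrite piE -E1 -rE E2.
have pi0 : pi ord0 = ord0.
  by rewrite piE; have := rE x0 x0; rewrite (s_xx Hr) (s_xx NR_scheme).
pose tau := (pi * sg)%g.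
have tauE i : tau i = sg (pi i) by rewrite permM.
pose S y y' := (tau^-1)%g (s y y').
have tau0 : (tau^-1)%g ord0 = ord0 by rewrite -{1}sg0 -pi0 -tauE permK.
have tau1 : tau one7 = i1 by rewrite tauE pi1 sg1.
have HS : is_scheme S by apply: scheme_relab.
have sS y y' : s y y' = tau (S y y') by rewrite permKV.
have rE' x y : r x y = pi (NR x y) by rewrite piE rE.
have HpS h j : pnum S h one7 j = pN h 1 j.
  rewrite -(pnum_relab S tau) tau1 -(pnum_ext sS) !tauE -Hp.
  by rewrite -pi1 (pnum_ext rE') pnum_relab pnumN.
have HvS i : valency S i = pN 0 i i.
  have tau0' : tau ord0 = ord0 by rewrite tauE pi0 sg0.
  rewrite -(@valency_relab _ _ S tau i tau0') -(valency_ext sS) tauE -Hval (valency_ext rE') valency_relab //.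
  by rewrite /valency pnumN.
case: (core HS HpS HvS) => f [fbij Hf].
exists f; split => //; exists sg; split => // x y.
by rewrite sS Hf tauE rE'.
Qed.
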